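(* Let $\varphi$ be a rational self-map of $\mathbb{D}$ having order of contact $n$ (an even positive integer) with $\partial\mathbb{D}$ at $\zeta\in\partial\mathbb{D}$, let $\lambda=\varphi(\zeta)$, and let $\sigma$ be a branch of $\varphi_e^{-1}$ defined on a neighborhood of $\lambda$ with $\sigma(\lambda)=\zeta$. Then $$D_n(\sigma\circ\varphi,\zeta)=\Big(\zeta,1,0,\dots,0,\frac{c}{\varphi'(\zeta)}\Big),\qquad D_n(\varphi\circ\sigma,\lambda)=\Big(\lambda,1,0,\dots,0,\frac{c}{\varphi'(\zeta)^n}\Big),$$ where $c=\varphi^{(n)}(\zeta)-\varphi_e^{(n)}(\zeta)\neq0$.
   Context: $\varphi_e=\rho\circ\varphi\circ\rho$ with $\rho(z)=1/\bar z$ (so $\varphi_e$ is analytic near $\zeta$ and $\varphi_e(\zeta)=\lambda$). For $h$ analytic at $z$, $D_n(h,z)=(h(z),h'(z),\dots,h^{(n)}(z))$. Order of contact $n$ at $\zeta$: $\varphi(\zeta)\in\partial\mathbb{D}$ and $\frac{1-|\varphi(e^{i\theta})|^2}{|\varphi(\zeta)-\varphi(e^{i\theta})|^n}$ is bounded above and away from zero as $e^{i\theta}\to\zeta$. *)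

(* Defs.v *)
From Stdlib Require Import Reals Lra List Arith.
Open Scope R_scope.

Record Cx := mkC { Cre : R; Cim : R }.

Definition C0 : Cx := mkC 0 0.
Definition C1 : Cx := mkC 1 0.
Definition RtoC (x : R) : Cx := mkC x 0.
Definition Cadd (z w : Cx) : Cx := mkC (Cre z + Cre w) (Cim z + Cim w).
Definition Copp (z : Cx) : Cx := mkC (- Cre z) (- Cim z).
Definition Csub (z w : Cx) : Cx := Cadd z (Copp w).
Definition Cmul (z w : Cx) : Cx :=
  mkC (Cre z * Cre w - Cim z * Cim w) (Cre z * Cim w + Cim z * Cre w).
(* total inverse; Cinv C0 is junk (= C0 up to Rinv 0) and never used *)
Definition Cinv (z : Cx) : Cx :=
  let d := Cre z * Cre z + Cim z * Cim z in mkC (Cre z / d) (- Cim z / d).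
Definition Cdiv (z w : Cx) : Cx := Cmul z (Cinv w).
Definition Cconj (z : Cx) : Cx := mkC (Cre z) (- Cim z).
Definition Cnorm (z : Cx) : R := sqrt (Cre z * Cre z + Cim z * Cim z).
Fixpoint Cpow (z : Cx) (n : nat) : Cx :=
  match n with O => C1 | S m => Cmul z (Cpow z m) end.

(* evaluation of a polynomial given by its coefficient list a0 :: a1 :: ... *)
Fixpoint peval (p : list Cx) (z : Cx) : Cx :=
  match p with nil => C0 | a :: p' => Cadd a (Cmul z (peval p' z)) end.

Definition ratfun (p q : list Cx) : Cx -> Cx := fun z => Cdiv (peval p z) (peval q z).

(* rho(z) = 1 / conj z, and the reflected map phi_e = rho o phi o rho *)
Definition rho (z : Cx) : Cx := Cinv (Cconj z).
Definition reflect_map (phi : Cx -> Cx) : Cx -> Cx := fun z => rho (phi (rho z)).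

Definition Cderiv_at (f : Cx -> Cx) (z l : Cx) : Prop :=
  forall eps, 0 < eps -> exists delta, 0 < delta /\
    forall h, 0 < Cnorm h < delta ->
      Cnorm (Csub (Cdiv (Csub (f (Cadd z h)) (f z)) h) l) < eps.

Definition derivs_on (f : Cx -> Cx) (z : Cx) (r : R) (g : nat -> Cx -> Cx) (n : nat)
  : Prop :=
  0 < r /\
  (forall w, Cnorm (Csub w z) < r -> g O w = f w) /\
  (forall k w, (k < n)%nat -> Cnorm (Csub w z) < r ->
     Cderiv_at (g k) w (g (S k) w)).

(* has_jet f z n d  :<->  f is n times complex differentiable near z and
   D_n(f,z) = (d 0, d 1, ..., d n), i.e. f^(k)(z) = d k for k <= n *)
Definition has_jet (f : Cx -> Cx) (z : Cx) (n : nat) (d : nat -> Cx) : Prop :=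
  exists r g, derivs_on f z r g n /\ forall k, (k <= n)%nat -> g k z = d k.

Definition holo_on_disc (f : Cx -> Cx) (z : Cx) (r : R) : Prop :=
  forall w, Cnorm (Csub w z) < r -> exists l, Cderiv_at f w l.

Definition rational_selfmap (p q : list Cx) : Prop :=
  (forall z, Cnorm z <= 1 -> peval q z <> C0) /\
  (forall z, Cnorm z < 1 -> Cnorm (ratfun p q z) < 1).

Definition order_of_contact (phi : Cx -> Cx) (zeta : Cx) (n : nat) : Prop :=
  Cnorm zeta = 1 /\ Cnorm (phi zeta) = 1 /\
  exists eps m M, 0 < eps /\ 0 < m /\
    forall w, Cnorm w = 1 -> 0 < Cnorm (Csub w zeta) < eps ->
      phi w <> phi zeta /\
      m <= (1 - Cnorm (phi w) ^ 2) / (Cnorm (Csub (phi zeta) (phi w))) ^ n <= M.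

Definition jet_form (z0 last : Cx) (n : nat) : nat -> Cx :=
  fun k => match k with
           | O => z0
           | S O => C1
           | _ => if Nat.eqb k n then last else C0
           end.

(* Main.v *)
Require Import Defs.
From Stdlib Require Import Reals List Arith.
From Stdlib Require Import Lra Lia.
Require Import Defs.
Open Scope R_scope.


Lemma Cx_eq : forall z w : Cx, Cre z = Cre w -> Cim z = Cim w -> z = w.
Proof. intros [a b] [c d]; simpl; intros; subst; reflexivity. Qed.

Ltac Cunf := unfold Csub, Cadd, Copp, Cmul, C0, C1, RtoC, Cconj, Cdiv in *.
Ltac cring := apply Cx_eq; Cunf; simpl; ring.

Definition nsq (z : Cx) := Cre z * Cre z + Cim z * Cim z.
Lemma nsq_ge0 z : 0 <= nsq z.
Proof. unfold nsq; nra. Qed.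
Lemma Cnorm_ge0 z : 0 <= Cnorm z.
Proof. apply sqrt_pos. Qed.
Lemma Cnorm_sq z : Cnorm z * Cnorm z = nsq z.
Proof. apply sqrt_sqrt, nsq_ge0. Qed.
Lemma Cnorm_le_sq z a : 0 <= a -> nsq z <= a * a -> Cnorm z <= a.
Proof. intros Ha H. unfold Cnorm. rewrite <- (sqrt_square a Ha). apply sqrt_le_1_alt. exact H. Qed.
Lemma Cnorm_sq_le z a : 0 <= a -> Cnorm z <= a -> nsq z <= a * a.
Proof. intros Ha H. rewrite <- Cnorm_sq. pose proof (Cnorm_ge0 z). nra. Qed.
Lemma Cnorm_lt_sq z a : 0 <= a -> Cnorm z < a -> nsq z < a * a.
Proof. intros Ha H. rewrite <- Cnorm_sq. pose proof (Cnorm_ge0 z). nra. Qed.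
Lemma Cnorm_eq_sq z w : nsq z = nsq w -> Cnorm z = Cnorm w.
Proof. intros H; unfold Cnorm; change (sqrt (nsq z) = sqrt (nsq w)); rewrite H; reflexivity. Qed.

Lemma nsq_mul z w : nsq (Cmul z w) = nsq z * nsq w.
Proof. unfold nsq, Cmul; simpl; ring. Qed.
Lemma Cnorm_mul z w : Cnorm (Cmul z w) = Cnorm z * Cnorm w.
Proof. unfold Cnorm; change (sqrt (nsq (Cmul z w)) = sqrt (nsq z) * sqrt (nsq w)). rewrite nsq_mul. apply sqrt_mult; apply nsq_ge0. Qed.

Lemma Cnorm_triangle z w : Cnorm (Cadd z w) <= Cnorm z + Cnorm w.
Proof.
  apply Cnorm_le_sq. pose proof (Cnorm_ge0 z); pose proof (Cnorm_ge0 w); lra.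
  pose proof (Cnorm_sq z) as Hz; pose proof (Cnorm_sq w) as Hw.
  pose proof (Cnorm_ge0 z); pose proof (Cnorm_ge0 w).
  assert (HC : (Cre z * Cre w + Cim z * Cim w) <= Cnorm z * Cnorm w).
  { assert (Hl : (Cre z * Cre w + Cim z * Cim w) * (Cre z * Cre w + Cim z * Cim w)
       <= (Cnorm z * Cnorm w) * (Cnorm z * Cnorm w)).
    { replace ((Cnorm z * Cnorm w) * (Cnorm z * Cnorm w)) with (nsq z * nsq w)
        by (rewrite <- Hz, <- Hw; ring).
      unfold nsq. pose proof (Rle_0_sqr (Cre z * Cim w - Cim z * Cre w)). unfold Rsqr in *. nra. }
    destruct (Rle_dec (Cre z * Cre w + Cim z * Cim w) 0). nra.
    assert (0 <= Cnorm z * Cnorm w) by nra. nra. }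
  unfold nsq in *; simpl. nra.
Qed.

Lemma Cnorm_opp z : Cnorm (Copp z) = Cnorm z.
Proof. apply Cnorm_eq_sq. unfold nsq, Copp; simpl; ring. Qed.
Lemma Cnorm_sub_sym z w : Cnorm (Csub z w) = Cnorm (Csub w z).
Proof. apply Cnorm_eq_sq. unfold nsq; Cunf; simpl; ring. Qed.
Lemma Cnorm_sub_triangle z w : Cnorm (Csub z w) <= Cnorm z + Cnorm w.
Proof. unfold Csub. rewrite <- (Cnorm_opp w). apply Cnorm_triangle. Qed.
Lemma Cnorm_rev_triangle z w : Cnorm z - Cnorm w <= Cnorm (Csub z w).
Proof.
  assert (z = Cadd (Csub z w) w) as E by cring.
  pose proof (Cnorm_triangle (Csub z w) w). rewrite <- E in H. lra.
Qed.

Lemma nsq_eq0 z : nsq z = 0 -> z = C0.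
Proof. unfold nsq; intros H. apply Cx_eq; unfold C0; simpl; nra. Qed.
Lemma Cnorm_eq0 z : Cnorm z = 0 -> z = C0.
Proof. intros H. apply nsq_eq0. rewrite <- Cnorm_sq, H. ring. Qed.
Lemma Cnorm_pos z : z <> C0 -> 0 < Cnorm z.
Proof. intros H. destruct (Cnorm_ge0 z); auto. exfalso; apply H, Cnorm_eq0; auto. Qed.
Lemma Cnorm_C0 : Cnorm C0 = 0.
Proof. unfold Cnorm, C0; simpl. replace (0*0+0*0) with 0 by ring; apply sqrt_0. Qed.
Lemma Cnorm_C1 : Cnorm C1 = 1.
Proof. unfold Cnorm, C1; simpl. replace (1*1+0*0) with 1 by ring; apply sqrt_1. Qed.
Lemma nsq_pos z : z <> C0 -> 0 < nsq z.
Proof. intros H; rewrite <- Cnorm_sq; pose proof (Cnorm_pos z H); nra. Qed.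

Lemma Cnorm_RtoC x : Cnorm (RtoC x) = Rabs x.
Proof. unfold Cnorm, RtoC; simpl. rewrite <- sqrt_Rsqr_abs. f_equal. unfold Rsqr; ring. Qed.

Lemma Cre_le z : Rabs (Cre z) <= Cnorm z.
Proof. rewrite <- sqrt_Rsqr_abs. apply sqrt_le_1_alt. unfold Rsqr, nsq. nra. Qed.
Lemma Cim_le z : Rabs (Cim z) <= Cnorm z.
Proof. rewrite <- sqrt_Rsqr_abs. apply sqrt_le_1_alt. unfold Rsqr, nsq. nra. Qed.
Lemma Cnorm_le_re_im z : Cnorm z <= Rabs (Cre z) + Rabs (Cim z).
Proof.
  apply Cnorm_le_sq. pose proof (Rabs_pos (Cre z)); pose proof (Rabs_pos (Cim z)); lra.
  pose proof (Rabs_pos (Cre z)); pose proof (Rabs_pos (Cim z)).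
  assert (Rabs (Cre z) * Rabs (Cre z) = Cre z * Cre z) by (rewrite <- Rabs_mult; apply Rabs_pos_eq; nra).
  assert (Rabs (Cim z) * Rabs (Cim z) = Cim z * Cim z) by (rewrite <- Rabs_mult; apply Rabs_pos_eq; nra).
  unfold nsq. nra.
Qed.

Lemma Cinv_l z : z <> C0 -> Cmul (Cinv z) z = C1.
Proof.
  intros H. pose proof (nsq_pos z H). unfold nsq in *. apply Cx_eq; unfold Cinv, Cmul, C1; simpl; field; lra.
Qed.
Lemma Cinv_r z : z <> C0 -> Cmul z (Cinv z) = C1.
Proof.
  intros H. pose proof (nsq_pos z H). unfold nsq in *. apply Cx_eq; unfold Cinv, Cmul, C1; simpl; field; lra.
Qed.
Lemma nsq_Cinv z : z <> C0 -> nsq (Cinv z) = / nsq z.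
Proof. intros H. pose proof (nsq_pos z H). unfold nsq in *; unfold Cinv; simpl. field. lra. Qed.
Lemma Cnorm_Cinv z : z <> C0 -> Cnorm (Cinv z) = / Cnorm z.
Proof. intros H. unfold Cnorm; change (sqrt (nsq (Cinv z)) = / sqrt (nsq z)). rewrite nsq_Cinv by auto. apply sqrt_inv. Qed.
Lemma Cinv_neq0 z : z <> C0 -> Cinv z <> C0.
Proof. intros H E. pose proof (Cinv_l z H). rewrite E in H0. unfold Cmul, C0, C1 in H0. injection H0. lra. Qed.
Lemma Cmul_neq0 z w : z <> C0 -> w <> C0 -> Cmul z w <> C0.
Proof. intros H1 H2 E. pose proof (nsq_pos z H1); pose proof (nsq_pos w H2).
  pose proof (nsq_mul z w). rewrite E in H3. assert (nsq C0 = 0) by (unfold nsq, C0; simpl; ring). nra. Qed.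
Lemma C1_neq0 : C1 <> C0.
Proof. unfold C1, C0; intro H; injection H; lra. Qed.

Lemma Cpow_neq0 z n : z <> C0 -> Cpow z n <> C0.
Proof. intros H; induction n; simpl. apply C1_neq0. apply Cmul_neq0; auto. Qed.
Lemma Cnorm_pow z n : Cnorm (Cpow z n) = Cnorm z ^ n.
Proof. induction n; simpl. apply Cnorm_C1. rewrite Cnorm_mul, IHn; ring. Qed.

Lemma Cmul_inv_cancel a b : b <> C0 -> Cmul (Cmul a b) (Cinv b) = a.
Proof. intros H. pose proof (Cinv_r b H). transitivity (Cmul a (Cmul b (Cinv b))). cring. rewrite H0; cring. Qed.

Lemma Cinv_mul a b : a <> C0 -> b <> C0 -> Cinv (Cmul a b) = Cmul (Cinv a) (Cinv b).
Proof.
  intros Ha Hb. pose proof (nsq_pos a Ha); pose proof (nsq_pos b Hb). unfold nsq in *.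
  apply Cx_eq; unfold Cinv, Cmul; simpl; field; split; nra.
Qed.
Lemma Cinv_pow a n : a <> C0 -> Cinv (Cpow a n) = Cpow (Cinv a) n.
Proof.
  intros Ha; induction n; simpl.
  apply Cx_eq; unfold Cinv, C1; simpl; field.
  rewrite Cinv_mul, IHn; auto. apply Cpow_neq0; auto.
Qed.


Definition small (E : Cx -> Cx) (k : nat) : Prop :=
  forall eps, 0 < eps -> exists delta, 0 < delta /\
    forall h, Cnorm h < delta -> Cnorm (E h) <= eps * Cnorm h ^ k.

Definition Dlin (f : Cx -> Cx) (z l : Cx) : Prop :=
  small (fun h => Csub (Csub (f (Cadd z h)) (f z)) (Cmul l h)) 1.

Lemma quot_id A h l : h <> C0 ->
  Csub (Cdiv A h) l = Cmul (Csub A (Cmul l h)) (Cinv h).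
Proof.
  intros H. transitivity (Csub (Cmul A (Cinv h)) (Cmul l (Cmul h (Cinv h)))).
  rewrite Cinv_r by auto. unfold Cdiv. cring. cring.
Qed.

Lemma Cderiv_Dlin f z l : Cderiv_at f z l <-> Dlin f z l.
Proof.
  split.
  - intros H eps Heps. destruct (H eps Heps) as [d [Hd Hh]]. exists d; split; auto.
    intros h Hhd. destruct (Req_dec (Cnorm h) 0) as [E|E].
    + apply Cnorm_eq0 in E. subst h.
      replace (Csub (Csub (f (Cadd z C0)) (f z)) (Cmul l C0)) with C0.
      rewrite Cnorm_C0. pose proof (Cnorm_ge0 C0). simpl. lra.
      replace (Cadd z C0) with z by cring. cring.
    + assert (hn : h <> C0) by (intro; subst; apply E, Cnorm_C0).
      pose proof (Cnorm_ge0 h).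
      specialize (Hh h ltac:(lra)). rewrite quot_id in Hh by auto.
      rewrite Cnorm_mul, Cnorm_Cinv in Hh by auto.
      set (X := Cnorm _) in *.
      assert (0 < Cnorm h) by lra.
      assert (X <= eps * Cnorm h). {
        apply (Rmult_lt_compat_r (Cnorm h)) in Hh; auto.
        rewrite Rmult_assoc, Rinv_l in Hh by lra. lra. }
      simpl. lra.
  - intros H eps Heps. destruct (H (eps/2) ltac:(lra)) as [d [Hd Hh]].
    exists d; split; auto. intros h [H1 H2].
    assert (hn : h <> C0) by (intro; subst; rewrite Cnorm_C0 in H1; lra).
    rewrite quot_id by auto. rewrite Cnorm_mul, Cnorm_Cinv by auto.
    specialize (Hh h H2). simpl in Hh. rewrite Rmult_1_r in Hh.
    apply (Rmult_le_compat_r (/ Cnorm h)) in Hh. 2: left; apply Rinv_0_lt_compat; lra.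
    rewrite Rmult_assoc, Rinv_r in Hh by lra. lra.
Qed.

Lemma small_ext E F k : (forall h, E h = F h) -> small E k -> small F k.
Proof. intros H S eps He. destruct (S eps He) as [d [Hd Hh]]. exists d; split; auto.
  intros h Hl; rewrite <- H; auto. Qed.

Lemma small_local E F k : (exists r, 0 < r /\ forall h, Cnorm h < r -> E h = F h) ->
  small E k -> small F k.
Proof. intros [r [Hr H]] S eps He. destruct (S eps He) as [d [Hd Hh]].
  exists (Rmin d r); split. apply Rmin_pos; auto.
  intros h Hl. pose proof (Rmin_l d r); pose proof (Rmin_r d r).
  rewrite <- H by lra. apply Hh; lra. Qed.

Lemma small_add E F k : small E k -> small F k -> small (fun h => Cadd (E h) (F h)) k.
Proof. intros S1 S2 eps He. destruct (S1 (eps/2) ltac:(lra)) as [d1 [Hd1 H1]].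
  destruct (S2 (eps/2) ltac:(lra)) as [d2 [Hd2 H2]].
  exists (Rmin d1 d2); split. apply Rmin_pos; auto.
  intros h Hl. pose proof (Rmin_l d1 d2); pose proof (Rmin_r d1 d2).
  specialize (H1 h ltac:(lra)); specialize (H2 h ltac:(lra)).
  pose proof (Cnorm_triangle (E h) (F h)). lra. Qed.

Lemma small_opp E k : small E k -> small (fun h => Copp (E h)) k.
Proof. intros S eps He. destruct (S eps He) as [d [Hd H]]. exists d; split; auto.
  intros h Hl. rewrite Cnorm_opp. auto. Qed.

Lemma small_sub E F k : small E k -> small F k -> small (fun h => Csub (E h) (F h)) k.
Proof. intros S1 S2. apply small_add; auto. apply small_opp; auto. Qed.

Lemma small_zero k : small (fun _ => C0) k.
Proof. intros eps He. exists 1; split; [lra|]. intros h _. rewrite Cnorm_C0.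
  pose proof (pow_le (Cnorm h) k (Cnorm_ge0 h)). nra. Qed.

Lemma small_mul_bound E F j m K :
  small E j -> (exists r, 0 < r /\ forall h, Cnorm h < r -> Cnorm (F h) <= K * Cnorm h ^ m) ->
  small (fun h => Cmul (F h) (E h)) (j + m).
Proof.
  intros S [r [Hr HF]] eps He.
  set (K' := Rabs K + 1).
  assert (HK' : 0 < K') by (unfold K'; pose proof (Rabs_pos K); lra).
  destruct (S (eps / K') ltac:(apply Rdiv_lt_0_compat; lra)) as [d [Hd HE]].
  exists (Rmin d r); split. apply Rmin_pos; auto.
  intros h Hl. pose proof (Rmin_l d r); pose proof (Rmin_r d r).
  specialize (HE h ltac:(lra)); specialize (HF h ltac:(lra)).
  rewrite Cnorm_mul, pow_add.
  pose proof (pow_le (Cnorm h) j (Cnorm_ge0 h)); pose proof (pow_le (Cnorm h) m (Cnorm_ge0 h)).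
  pose proof (Cnorm_ge0 (F h)); pose proof (Cnorm_ge0 (E h)).
  assert (Cnorm (F h) <= K' * Cnorm h ^ m).
  { unfold K'. pose proof (Rle_abs K). nra. }
  apply Rle_trans with ((K' * Cnorm h ^ m) * (eps / K' * Cnorm h ^ j)).
  apply Rmult_le_compat; auto.
  right. field. lra.
Qed.

Lemma small_scal c E k : small E k -> small (fun h => Cmul c (E h)) k.
Proof. intros S. replace k with (k + 0)%nat by lia. apply small_mul_bound with (Cnorm c); auto.
  exists 1; split; [lra|]. intros; simpl; lra. Qed.

Lemma small_down E k : small E (S k) -> small E k.
Proof. intros S eps He. destruct (S eps He) as [d [Hd H]]. exists (Rmin d 1); split.
  apply Rmin_pos; lra. intros h Hl. pose proof (Rmin_l d 1); pose proof (Rmin_r d 1).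
  specialize (H h ltac:(lra)). simpl in H.
  pose proof (pow_le (Cnorm h) k (Cnorm_ge0 h)). pose proof (Cnorm_ge0 h).
  assert (Cnorm h * Cnorm h ^ k <= Cnorm h ^ k) by nra. nra. Qed.

Lemma small_down_le E k j : (j <= k)%nat -> small E k -> small E j.
Proof. intros H; induction H; auto. intros S; apply IHle, small_down; auto. Qed.

Lemma bigO_small E k C : (exists r, 0 < r /\ forall h, Cnorm h < r -> Cnorm (E h) <= C * Cnorm h ^ S k) ->
  small E k.
Proof.
  intros [r [Hr H]] eps He.
  set (C' := Rabs C + 1). assert (0 < C') by (unfold C'; pose proof (Rabs_pos C); lra).
  exists (Rmin r (eps / C')); split. apply Rmin_pos; auto. apply Rdiv_lt_0_compat; lra.
  intros h Hl. pose proof (Rmin_l r (eps/C')); pose proof (Rmin_r r (eps/C')).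
  specialize (H h ltac:(lra)). simpl in H.
  pose proof (pow_le (Cnorm h) k (Cnorm_ge0 h)). pose proof (Cnorm_ge0 h).
  assert (C <= C') by (unfold C'; pose proof (Rle_abs C); lra).
  assert (C' * Cnorm h <= eps). { apply (Rmult_le_reg_r (/C')). apply Rinv_0_lt_compat; lra.
    replace (C' * Cnorm h * / C') with (Cnorm h) by (field; lra). unfold Rdiv in *; lra. }
  apply Rle_trans with (C * (Cnorm h * Cnorm h ^ k)); auto.
  apply Rle_trans with (C' * (Cnorm h * Cnorm h ^ k)). 
  apply Rmult_le_compat_r; nra. nra.
Qed.

Lemma small_comp E k v C :
  small E k -> (exists r, 0 < r /\ forall h, Cnorm h < r -> Cnorm (v h) <= C * Cnorm h) ->
  small (fun h => E (v h)) k.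
Proof.
  intros S [r [Hr H]] eps He.
  set (C' := Rabs C + 1). assert (0 < C') by (unfold C'; pose proof (Rabs_pos C); lra).
  assert (HC : C <= C') by (unfold C'; pose proof (Rle_abs C); lra).
  assert (0 < C' ^ k) by (apply pow_lt; lra).
  destruct (S (eps / C' ^ k) ltac:(apply Rdiv_lt_0_compat; lra)) as [d [Hd HE]].
  exists (Rmin r (d / C')); split. apply Rmin_pos; auto. apply Rdiv_lt_0_compat; lra.
  intros h Hl. pose proof (Rmin_l r (d/C')); pose proof (Rmin_r r (d/C')).
  specialize (H h ltac:(lra)). pose proof (Cnorm_ge0 h).
  assert (Hv : Cnorm (v h) <= C' * Cnorm h) by nra.
  assert (C' * Cnorm h < d). { apply (Rmult_lt_reg_r (/C')). apply Rinv_0_lt_compat; lra.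
    replace (C' * Cnorm h * / C') with (Cnorm h) by (field; lra). unfold Rdiv in *; lra. }
  specialize (HE (v h) ltac:(lra)).
  apply Rle_trans with (eps / C'^k * Cnorm (v h) ^ k); auto.
  apply Rle_trans with (eps / C'^k * (C' * Cnorm h) ^ k).
  apply Rmult_le_compat_l. left; apply Rdiv_lt_0_compat; lra.
  apply pow_incr; split; auto; apply Cnorm_ge0.
  rewrite Rpow_mult_distr. right; field; lra.
Qed.


Lemma Dlin_bound f z l : Dlin f z l -> exists r, 0 < r /\
  forall h, Cnorm h < r -> Cnorm (Csub (f (Cadd z h)) (f z)) <= (Cnorm l + 1) * Cnorm h.
Proof.
  intros S. destruct (S 1 ltac:(lra)) as [d [Hd H]]. exists d; split; auto.
  intros h Hh. specialize (H h Hh). simpl in H.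
  set (A := Csub (f (Cadd z h)) (f z)) in *.
  assert (A = Cadd (Csub A (Cmul l h)) (Cmul l h)) as E by cring.
  rewrite E. eapply Rle_trans. apply Cnorm_triangle. rewrite Cnorm_mul. lra.
Qed.

Lemma Dlin_cont f z l : Dlin f z l -> small (fun h => Csub (f (Cadd z h)) (f z)) 0.
Proof.
  intros S. apply bigO_small with (Cnorm l + 1).
  destruct (Dlin_bound f z l S) as [r [Hr H]]. exists r; split; auto.
  intros h Hh; simpl; rewrite Rmult_1_r; auto.
Qed.

Lemma Dlin_const c z : Dlin (fun _ => c) z C0.
Proof. apply small_ext with (fun _ => C0). intros; cring. apply small_zero. Qed.
Lemma Dlin_id z : Dlin (fun w => w) z C1.
Proof. apply small_ext with (fun _ => C0). intros; cring. apply small_zero. Qed.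

Lemma Dlin_add f g z a b : Dlin f z a -> Dlin g z b -> Dlin (fun w => Cadd (f w) (g w)) z (Cadd a b).
Proof. intros S1 S2. eapply small_ext. 2: apply (small_add _ _ _ S1 S2). intros; simpl; cring. Qed.
Lemma Dlin_sub f g z a b : Dlin f z a -> Dlin g z b -> Dlin (fun w => Csub (f w) (g w)) z (Csub a b).
Proof. intros S1 S2. eapply small_ext. 2: apply (small_sub _ _ _ S1 S2). intros; simpl; cring. Qed.
Lemma Dlin_scal c f z a : Dlin f z a -> Dlin (fun w => Cmul c (f w)) z (Cmul c a).
Proof. intros S1. eapply small_ext. 2: apply (small_scal c _ _ S1). intros; simpl; cring. Qed.

Lemma Dlin_mul f g z a b : Dlin f z a -> Dlin g z b ->
  Dlin (fun w => Cmul (f w) (g w)) z (Cadd (Cmul a (g z)) (Cmul (f z) b)).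
Proof.
  intros S1 S2.
  set (Ef := fun h => Csub (Csub (f (Cadd z h)) (f z)) (Cmul a h)).
  set (Eg := fun h => Csub (Csub (g (Cadd z h)) (g z)) (Cmul b h)).
  set (B := fun h => Csub (g (Cadd z h)) (g z)).
  apply small_ext with (fun h => Cadd (Cadd (Cmul (g (Cadd z h)) (Ef h)) (Cmul (Cmul a h) (B h)))
                                     (Cmul (f z) (Eg h))).
  { intros h; unfold Ef, Eg, B; cring. }
  apply small_add. apply small_add.
  - replace 1%nat with (1 + 0)%nat by lia. apply small_mul_bound with (Cnorm (g z) + (Cnorm b + 1) * 1); auto.
    destruct (Dlin_bound g z b S2) as [r [Hr H]]. exists (Rmin r 1); split. apply Rmin_pos; lra.
    intros h Hh. pose proof (Rmin_l r 1); pose proof (Rmin_r r 1). specialize (H h ltac:(lra)).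
    simpl. rewrite Rmult_1_r.
    assert (g (Cadd z h) = Cadd (Csub (g (Cadd z h)) (g z)) (g z)) as E by cring.
    rewrite E. eapply Rle_trans. apply Cnorm_triangle. pose proof (Cnorm_ge0 b). pose proof (Cnorm_ge0 h). nra.
  - replace 1%nat with (0 + 1)%nat by lia. apply small_mul_bound with (Cnorm a).
    apply Dlin_cont with b; auto. exists 1; split; [lra|]. intros h _. rewrite Cnorm_mul; simpl; lra.
  - apply small_scal; auto.
Qed.

Lemma Dlin_comp f g z a b : Dlin g z b -> Dlin f (g z) a ->
  Dlin (fun w => f (g w)) z (Cmul a b).
Proof.
  intros S1 S2.
  set (k := fun h => Csub (g (Cadd z h)) (g z)).
  set (Ef := fun u => Csub (Csub (f (Cadd (g z) u)) (f (g z))) (Cmul a u)).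
  set (Eg := fun h => Csub (Csub (g (Cadd z h)) (g z)) (Cmul b h)).
  apply small_ext with (fun h => Cadd (Ef (k h)) (Cmul a (Eg h))).
  { intros h. unfold Ef, Eg, k. replace (Cadd (g z) (Csub (g (Cadd z h)) (g z))) with (g (Cadd z h)) by cring. cring. }
  apply small_add. 2: apply small_scal; auto.
  apply small_comp with (Cnorm b + 1). exact S2. apply Dlin_bound; auto.
Qed.

Lemma Cinv_id w h : w <> C0 -> Cadd w h <> C0 ->
  Csub (Csub (Cinv (Cadd w h)) (Cinv w)) (Cmul (Copp (Cmul (Cinv w) (Cinv w))) h)
  = Cmul (Cmul h h) (Cmul (Cmul (Cinv w) (Cinv w)) (Cinv (Cadd w h))).
Proof.
  intros H1 H2. pose proof (nsq_pos _ H1); pose proof (nsq_pos _ H2).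
  destruct w as [x y], h as [u v]. unfold nsq in *; simpl in *.
  apply Cx_eq; unfold Cinv, Csub, Cadd, Copp, Cmul; simpl; field; lra.
Qed.

Lemma Dlin_Cinv w : w <> C0 -> Dlin Cinv w (Copp (Cmul (Cinv w) (Cinv w))).
Proof.
  intros Hw. pose proof (Cnorm_pos w Hw).
  apply bigO_small with (2 * / (Cnorm w * Cnorm w * Cnorm w)).
  exists (Cnorm w / 2); split; [lra|]. intros h Hh.
  assert (Hwh : Cnorm w / 2 <= Cnorm (Cadd w h)).
  { pose proof (Cnorm_rev_triangle w (Copp h)). rewrite Cnorm_opp in H0.
    replace (Csub w (Copp h)) with (Cadd w h) in H0 by cring. lra. }
  assert (Hn : Cadd w h <> C0) by (intro E; rewrite E, Cnorm_C0 in Hwh; lra).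
  rewrite Cinv_id by auto. rewrite !Cnorm_mul, !Cnorm_Cinv by auto.
  simpl. rewrite Rmult_1_r. pose proof (Cnorm_ge0 h).
  assert (/ Cnorm (Cadd w h) <= 2 / Cnorm w).
  { apply (Rmult_le_reg_r (Cnorm (Cadd w h) * Cnorm w)). nra.
    replace (/ Cnorm (Cadd w h) * (Cnorm (Cadd w h) * Cnorm w)) with (Cnorm w) by (field; lra).
    replace (2 / Cnorm w * (Cnorm (Cadd w h) * Cnorm w)) with (2 * Cnorm (Cadd w h)) by (field; lra). lra. }
  assert (0 < / Cnorm w) by (apply Rinv_0_lt_compat; lra).
  replace (2 * / (Cnorm w * Cnorm w * Cnorm w)) with (/ Cnorm w * / Cnorm w * (2 / Cnorm w)) by (field; lra).
  apply Rle_trans with (Cnorm h * Cnorm h * (/ Cnorm w * / Cnorm w * (2 / Cnorm w))).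
  apply Rmult_le_compat_l. nra. apply Rmult_le_compat_l. nra. auto. right; ring.
Qed.

Lemma small1_const c : small (fun h => Cmul c h) 1 -> c = C0.
Proof.
  intros S. destruct (Req_dec (Cnorm c) 0) as [E|E]. apply Cnorm_eq0; auto.
  pose proof (Cnorm_ge0 c) as Hc.
  destruct (S (Cnorm c / 2) ltac:(lra)) as [d [Hd H]].
  specialize (H (RtoC (d/2))). rewrite Cnorm_mul, Cnorm_RtoC, Rabs_pos_eq in H by lra.
  simpl in H. specialize (H ltac:(lra)). nra.
Qed.

Lemma Dlin_unique f z a b : Dlin f z a -> Dlin f z b -> a = b.
Proof.
  intros S1 S2. assert (Csub b a = C0).
  { apply small1_const. eapply small_ext. 2: apply (small_sub _ _ _ S1 S2). intros h; simpl; cring. }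
  apply Cx_eq; unfold Csub, Cadd, Copp, C0 in H; injection H; lra.
Qed.

Lemma Dlin_local f g z l r : 0 < r -> (forall w, Cnorm (Csub w z) < r -> f w = g w) ->
  Dlin f z l -> Dlin g z l.
Proof.
  intros Hr H S. apply small_local with (2 := S). exists r; split; auto.
  intros h Hh. rewrite !H. auto.
  replace (Csub z z) with C0 by cring. rewrite Cnorm_C0; lra.
  replace (Csub (Cadd z h) z) with h by cring. auto.
Qed.

Lemma Dlin_eq_l f z a b : Dlin f z a -> a = b -> Dlin f z b.
Proof. intros H ->; auto. Qed.
Lemma Dlin_pow m z : Dlin (fun w => Cpow w (S m)) z (Cmul (RtoC (INR (S m))) (Cpow z m)).
Proof.
  induction m.
  - apply Dlin_eq_l with C1. eapply small_ext; [|apply (Dlin_id z)]. intros; simpl; cring.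
    simpl; cring.
  - change (fun w => Cpow w (S (S m))) with (fun w => Cmul w (Cpow w (S m))).
    pose proof (Dlin_mul _ _ z _ _ (Dlin_id z) IHm).
    eapply Dlin_eq_l. exact H.
    rewrite (S_INR (S m)). change (Cpow z (S m)) with (Cmul z (Cpow z m)). cring.
Qed.


Fixpoint Tay (c : nat -> Cx) (n : nat) (h : Cx) : Cx :=
  match n with
  | O => c O
  | S m => Cadd (Tay c m h) (Cmul (Cmul (c (S m)) (RtoC (/ INR (fact (S m))))) (Cpow h (S m)))
  end.

Lemma INR_fact_pos m : 0 < INR (fact m).
Proof. apply lt_0_INR. apply lt_O_fact. Qed.

Lemma Dlin_Tay c n h : Dlin (Tay c (S n)) h (Tay (fun i => c (S i)) n h).
Proof.
  revert h; induction n; intros h.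
  - change (Tay c 1) with (fun h => Cadd (c O) (Cmul (Cmul (c 1%nat) (RtoC (/ INR (fact 1)))) (Cpow h 1))).
    eapply Dlin_eq_l. apply Dlin_add. apply Dlin_const. apply Dlin_scal. apply (Dlin_pow 0).
    simpl. replace (/ (1)) with 1 by field. cring.
  - change (Tay c (S (S n))) with (fun h => Cadd (Tay c (S n) h) (Cmul (Cmul (c (S (S n))) (RtoC (/ INR (fact (S (S n)))))) (Cpow h (S (S n))))).
    eapply Dlin_eq_l. apply Dlin_add. apply IHn. apply Dlin_scal. apply (Dlin_pow (S n)).
    change (Tay (fun i => c (S i)) (S n) h) with
      (Cadd (Tay (fun i => c (S i)) n h) (Cmul (Cmul (c (S (S n))) (RtoC (/ INR (fact (S n))))) (Cpow h (S n)))).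
    f_equal.
    assert (E : / INR (fact (S (S n))) * INR (S (S n)) = / INR (fact (S n))).
    { change (fact (S (S n))) with (S (S n) * fact (S n))%nat. rewrite mult_INR.
      pose proof (INR_fact_pos (S n)). assert (0 < INR (S (S n))) by (apply lt_0_INR; lia).
      field. lra. }
    rewrite <- E. cring.
Qed.

Lemma Tay_0 c n : Tay c n C0 = c O.
Proof. induction n; simpl; auto. rewrite IHn. cring. Qed.

Lemma Tay_sub a b n h : Tay (fun i => Csub (a i) (b i)) n h = Csub (Tay a n h) (Tay b n h).
Proof. induction n; simpl; auto. rewrite IHn. cring. Qed.

Lemma Tay_zero c n h : (forall i, (i <= n)%nat -> c i = C0) -> Tay c n h = C0.
Proof. induction n; intros H; simpl. apply H; lia. rewrite IHn by (intros; apply H; lia).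
  rewrite (H (S n)) by lia. cring. Qed.

Lemma Tay_ext a b n h : (forall i, (i <= n)%nat -> a i = b i) -> Tay a n h = Tay b n h.
Proof. induction n; intros H; simpl. apply H; lia. rewrite IHn by (intros; apply H; lia).
  rewrite (H (S n)) by lia. auto. Qed.

Lemma small_pow_const K k : small (fun h => Cmul K (Cpow h k)) k -> K = C0.
Proof.
  intros HS. destruct (Req_dec (Cnorm K) 0) as [E|E]. apply Cnorm_eq0; auto.
  pose proof (Cnorm_ge0 K) as HK.
  destruct (HS (Cnorm K / 2) ltac:(lra)) as [d [Hd H]].
  specialize (H (RtoC (d/2))). rewrite Cnorm_mul, Cnorm_pow, Cnorm_RtoC, Rabs_pos_eq in H by lra.
  specialize (H ltac:(lra)). assert (0 < (d/2) ^ k) by (apply pow_lt; lra). nra.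
Qed.

Lemma Tay_small_zero c n : small (Tay c n) n -> forall i, (i <= n)%nat -> c i = C0.
Proof.
  revert c; induction n; intros c HS.
  - intros i Hi. assert (i = O) by lia; subst.
    apply (small_pow_const (c O) 0). eapply small_ext; [|exact HS]. intros; simpl; cring.
  - set (T := fun h => Cmul (Cmul (c (S n)) (RtoC (/ INR (fact (S n))))) (Cpow h (S n))).
    assert (Hm : forall i, (i <= n)%nat -> c i = C0).
    { apply IHn. apply small_ext with (fun h => Csub (Tay c (S n) h) (T h)).
      intros h; simpl; unfold T; cring.
      apply small_sub. apply small_down; exact HS.
      apply bigO_small with (Cnorm (Cmul (c (S n)) (RtoC (/ INR (fact (S n)))))).
      exists 1; split; [lra|]. intros h _. unfold T. rewrite Cnorm_mul, Cnorm_pow. lra. }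
    assert (K : Cmul (c (S n)) (RtoC (/ INR (fact (S n)))) = C0).
    { apply small_pow_const with (S n). eapply small_ext; [|exact HS]. intros h; simpl.
      rewrite Tay_zero by auto. cring. }
    intros i Hi. destruct (Nat.eq_dec i (S n)). subst.
    + assert (Hf : RtoC (/ INR (fact (S n))) <> C0).
      { intro E. assert (E2 : / INR (fact (S n)) = 0) by
          (change (/ INR (fact (S n))) with (Cre (RtoC (/ INR (fact (S n))))); rewrite E; reflexivity).
        pose proof (INR_fact_pos (S n)).
        assert (0 < / INR (fact (S n))) by (apply Rinv_0_lt_compat; lra). lra. }
      destruct (Req_dec (Cnorm (c (S n))) 0). apply Cnorm_eq0; auto.
      pose proof (Cnorm_pos _ Hf).
      assert (Cnorm (Cmul (c (S n)) (RtoC (/ INR (fact (S n))))) = 0) by (rewrite K; apply Cnorm_C0).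
      rewrite Cnorm_mul in H1. pose proof (Cnorm_ge0 (c (S n))). nra.
    + apply Hm; lia.
Qed.

Lemma Tay_unique F a b n :
  small (fun h => Csub (F h) (Tay a n h)) n -> small (fun h => Csub (F h) (Tay b n h)) n ->
  forall i, (i <= n)%nat -> a i = b i.
Proof.
  intros S1 S2 i Hi.
  assert (forall i, (i <= n)%nat -> Csub (a i) (b i) = C0).
  { apply Tay_small_zero. eapply small_ext; [| apply (small_sub _ _ _ S2 S1)].
    intros h; simpl. rewrite Tay_sub. cring. }
  specialize (H i Hi). apply Cx_eq; unfold Csub, Cadd, Copp, C0 in H; injection H; lra.
Qed.

Lemma MVT_re F F' z h K :
  (forall s, 0 <= s <= 1 -> Dlin F (Cadd z (Cmul (RtoC s) h)) (F' (Cadd z (Cmul (RtoC s) h)))) ->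
  (forall s, 0 <= s <= 1 -> Cnorm (F' (Cadd z (Cmul (RtoC s) h))) <= K) ->
  Rabs (Cre (F (Cadd z h)) - Cre (F z)) <= K * Cnorm h.
Proof.
  intros HD HK.
  set (r := fun s => Cre (F (Cadd z (Cmul (RtoC s) h)))).
  set (r' := fun s => Cre (Cmul (F' (Cadd z (Cmul (RtoC s) h))) h)).
  assert (Hd : forall c, 0 <= c <= 1 -> derivable_pt_lim r c (r' c)).
  { intros c Hc eps Heps. specialize (HD c Hc).
    set (p := Cadd z (Cmul (RtoC c) h)) in *.
    pose proof (Cnorm_ge0 h) as Hh0.
    destruct (HD (eps / (2 * (Cnorm h + 1))) ltac:(apply Rdiv_lt_0_compat; lra)) as [d [Hd0 Hdd]].
    assert (Hpos : 0 < d / (Cnorm h + 1)) by (apply Rdiv_lt_0_compat; lra).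
    exists (mkposreal _ Hpos). intros t Ht0 Htd. simpl in Htd.
    specialize (Hdd (Cmul (RtoC t) h)).
    rewrite Cnorm_mul, Cnorm_RtoC in Hdd.
    assert (Rabs t * Cnorm h < d).
    { apply Rle_lt_trans with (Rabs t * (Cnorm h + 1)). pose proof (Rabs_pos t); nra.
      apply (Rmult_lt_reg_r (/ (Cnorm h + 1))). apply Rinv_0_lt_compat; lra.
      replace (Rabs t * (Cnorm h + 1) * / (Cnorm h + 1)) with (Rabs t) by (field; lra).
      unfold Rdiv in Htd; lra. }
    specialize (Hdd H). simpl in Hdd. rewrite Rmult_1_r in Hdd.
    unfold r, r'. fold p.
    replace (Cadd z (Cmul (RtoC (c + t)) h)) with (Cadd p (Cmul (RtoC t) h)) by (unfold p; cring).
    set (E := Csub (Csub (F (Cadd p (Cmul (RtoC t) h))) (F p)) (Cmul (F' p) (Cmul (RtoC t) h))) in *.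
    assert (Cre (F (Cadd p (Cmul (RtoC t) h))) - Cre (F p) = Cre E + t * Cre (Cmul (F' p) h)).
    { unfold E; Cunf; simpl; ring. }
    rewrite H0. replace ((Cre E + t * Cre (Cmul (F' p) h)) / t - Cre (Cmul (F' p) h)) with (Cre E / t) by (field; auto).
    unfold Rdiv. rewrite Rabs_mult, Rabs_inv.
    pose proof (Cre_le E). assert (0 < Rabs t) by (apply Rabs_pos_lt; auto).
    apply Rle_lt_trans with (eps / (2 * (Cnorm h + 1)) * (Rabs t * Cnorm h) * / Rabs t).
    apply Rmult_le_compat_r. left; apply Rinv_0_lt_compat; auto. lra.
    replace (eps / (2 * (Cnorm h + 1)) * (Rabs t * Cnorm h) * / Rabs t) with (eps * (Cnorm h / (2 * (Cnorm h + 1)))) by (field; lra).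
    assert (Cnorm h / (2 * (Cnorm h + 1)) < 1).
    { apply (Rmult_lt_reg_r (2 * (Cnorm h + 1))). lra. unfold Rdiv. rewrite Rmult_assoc, Rinv_l by lra. lra. }
    nra. }
  destruct (MVT_cor2 r r' 0 1 ltac:(lra) Hd) as [c [Hc Hc2]].
  unfold r in Hc. replace (Cadd z (Cmul (RtoC 1) h)) with (Cadd z h) in Hc by cring.
  replace (Cadd z (Cmul (RtoC 0) h)) with z in Hc by cring.
  rewrite Hc. replace (r' c * (1 - 0)) with (r' c) by ring. unfold r'. eapply Rle_trans. apply Cre_le.
  rewrite Cnorm_mul. apply Rmult_le_compat_r. apply Cnorm_ge0. apply HK; lra.
Qed.

Definition ci : Cx := mkC 0 (-1).

Lemma MVT_C F F' z h K :
  (forall s, 0 <= s <= 1 -> Dlin F (Cadd z (Cmul (RtoC s) h)) (F' (Cadd z (Cmul (RtoC s) h)))) ->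
  (forall s, 0 <= s <= 1 -> Cnorm (F' (Cadd z (Cmul (RtoC s) h))) <= K) ->
  Cnorm (Csub (F (Cadd z h)) (F z)) <= 2 * K * Cnorm h.
Proof.
  intros HD HK. pose proof (MVT_re F F' z h K HD HK) as H1.
  pose proof (MVT_re (fun w => Cmul ci (F w)) (fun w => Cmul ci (F' w)) z h K) as H2.
  assert (Hci : Cnorm ci = 1). { unfold ci, Cnorm; simpl. replace (0*0+ -1 * -1) with 1 by ring. apply sqrt_1. }
  specialize (H2 ltac:(intros; cbv beta; apply Dlin_scal; auto)).
  specialize (H2 ltac:(intros; cbv beta; rewrite Cnorm_mul, Hci, Rmult_1_l; auto)).
  eapply Rle_trans. apply Cnorm_le_re_im.
  replace (Cre (Csub (F (Cadd z h)) (F z))) with (Cre (F (Cadd z h)) - Cre (F z)) by (Cunf; simpl; ring).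
  replace (Cim (Csub (F (Cadd z h)) (F z))) with (Cre (Cmul ci (F (Cadd z h))) - Cre (Cmul ci (F z))) by (unfold ci; Cunf; simpl; ring).
  lra.
Qed.


Definition ball (z : Cx) (r : R) (w : Cx) : Prop := Cnorm (Csub w z) < r.
Definition chain (g : nat -> Cx -> Cx) (n : nat) (U : Cx -> Prop) : Prop :=
  forall k w, (k < n)%nat -> U w -> Dlin (g k) w (g (S k) w).

Lemma Csub_diag a : Csub a a = C0.
Proof. cring. Qed.

Lemma ball_center z r : 0 < r -> ball z r z.
Proof. intros; unfold ball. replace (Csub z z) with C0 by cring. rewrite Cnorm_C0; auto. Qed.

Lemma Dlin_shift f z u l : Dlin f (Cadd z u) l -> Dlin (fun v => f (Cadd z v)) u l.
Proof.
  intros H. assert (Dlin (fun v => Cadd z v) u C1).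
  { eapply Dlin_eq_l. apply Dlin_add. apply Dlin_const. apply Dlin_id. cring. }
  eapply Dlin_eq_l. apply (Dlin_comp f (fun v => Cadd z v) u l C1); auto. cring.
Qed.

Lemma peano m : forall g z r, 0 < r -> chain g (S m) (ball z r) ->
  small (fun h => Csub (g O (Cadd z h)) (Tay (fun i => g i z) (S m) h)) (S m).
Proof.
  induction m; intros g z r Hr Hc.
  - assert (H := Hc O z ltac:(lia) (ball_center z r Hr)).
    eapply small_ext; [|exact H]. intros h. simpl.
    replace (/ (1)) with 1 by field. cring.
  - set (c := fun i => g i z).
    assert (IH := IHm (fun k => g (S k)) z r Hr ltac:(intros k w Hk Hw; apply Hc; auto; lia)).
    simpl in IH. fold c in IH.
    set (F := fun u => Csub (g O (Cadd z u)) (Tay c (S (S m)) u)).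
    set (F' := fun u => Csub (g 1%nat (Cadd z u)) (Tay (fun i => c (S i)) (S m) u)).
    assert (HD : forall u, Cnorm u < r -> Dlin F u (F' u)).
    { intros u Hu. unfold F, F'. apply Dlin_sub. apply Dlin_shift. apply Hc. lia.
      unfold ball. replace (Csub (Cadd z u) z) with u by cring. auto. apply Dlin_Tay. }
    intros eps He. destruct (IH (eps/2) ltac:(lra)) as [d [Hd Hdd]].
    exists (Rmin d r); split. apply Rmin_pos; auto.
    intros h Hh. pose proof (Rmin_l d r); pose proof (Rmin_r d r).
    assert (Hs : forall s, 0 <= s <= 1 -> Cnorm (Cadd C0 (Cmul (RtoC s) h)) <= Cnorm h).
    { intros s Hs. replace (Cadd C0 (Cmul (RtoC s) h)) with (Cmul (RtoC s) h) by cring.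
      rewrite Cnorm_mul, Cnorm_RtoC, Rabs_pos_eq by lra. pose proof (Cnorm_ge0 h). nra. }
    pose proof (MVT_C F F' C0 h (eps/2 * Cnorm h ^ S m)) as HM.
    assert (HM1 : forall s, 0 <= s <= 1 -> Dlin F (Cadd C0 (Cmul (RtoC s) h)) (F' (Cadd C0 (Cmul (RtoC s) h)))).
    { intros s Hs'. apply HD. specialize (Hs s Hs'). lra. }
    assert (HM2 : forall s, 0 <= s <= 1 -> Cnorm (F' (Cadd C0 (Cmul (RtoC s) h))) <= eps / 2 * Cnorm h ^ S m).
    { intros s Hs'. specialize (Hs s Hs'). eapply Rle_trans. apply Hdd. lra.
      apply Rmult_le_compat_l. lra. apply pow_incr. split; auto. apply Cnorm_ge0. }
    specialize (HM HM1 HM2).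
    replace (Cadd C0 h) with h in HM by cring.
    assert (F C0 = C0). { unfold F. rewrite Tay_0. replace (Cadd z C0) with z by cring. unfold c. apply Csub_diag. }
    rewrite H1 in HM. replace (Csub (F h) C0) with (F h) in HM by cring.
    unfold F in HM. eapply Rle_trans. exact HM. right. simpl. field.
Qed.

Fixpoint Ck (k : nat) (U : Cx -> Prop) (f : Cx -> Cx) : Prop :=
  match k with
  | O => True
  | S k' => exists f', (forall w, U w -> Dlin f w (f' w)) /\ Ck k' U f'
  end.

Lemma Ck_down k : forall U f, Ck (S k) U f -> Ck k U f.
Proof.
  induction k; intros U f H; simpl; auto.
  destruct H as [f' [H1 H2]]. exists f'; split; auto.
Qed.

Lemma Ck_le k j U f : (j <= k)%nat -> Ck k U f -> Ck j U f.
Proof. intros H; induction H; auto. intros; apply IHle, Ck_down; auto. Qed.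

Lemma Ck_sub_set k : forall (U V : Cx -> Prop) f, (forall w, V w -> U w) -> Ck k U f -> Ck k V f.
Proof.
  induction k; intros U V f HUV H; simpl; auto.
  destruct H as [f' [H1 H2]]. exists f'; split; eauto.
Qed.

Lemma Ck_chain n : forall U f, Ck n U f -> exists g, g O = f /\ chain g n U.
Proof.
  induction n; intros U f H.
  - exists (fun _ => f); split; auto. intros k w Hk; lia.
  - destruct H as [f' [H1 H2]]. destruct (IHn U f' H2) as [g [Hg0 Hg]].
    exists (fun k => match k with O => f | S k' => g k' end); split; auto.
    intros k w Hk Hw. destruct k. simpl. rewrite Hg0. apply H1; auto.
    apply Hg; auto; lia.
Qed.

Lemma chain_Ck g n U : chain g n U -> forall k j, (j + k <= n)%nat -> Ck k U (g j).
Proof.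
  intros H k. induction k; intros j Hjk; simpl; auto.
  exists (g (S j)); split. intros w Hw; apply H; auto; lia. apply IHk; lia.
Qed.

Definition openset (U : Cx -> Prop) := forall w, U w -> exists r, 0 < r /\ forall v, Cnorm (Csub v w) < r -> U v.

Lemma ball_open z r : openset (ball z r).
Proof.
  intros w Hw. unfold ball in *. exists (r - Cnorm (Csub w z)); split. lra.
  intros v Hv. replace (Csub v z) with (Cadd (Csub v w) (Csub w z)) by cring.
  eapply Rle_lt_trans. apply Cnorm_triangle. lra.
Qed.

Lemma Ck_local k U f g : openset U -> (forall w, U w -> f w = g w) -> Ck k U f -> Ck k U g.
Proof.
  intros HU Hfg. destruct k; simpl; auto. intros [f' [H1 H2]]. exists f'; split; auto.
  intros w Hw. destruct (HU w Hw) as [r [Hr Hv]]. apply Dlin_local with f r; auto.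
Qed.

Lemma Ck_const k U c : Ck k U (fun _ => c).
Proof. revert c; induction k; intros c; simpl; auto. exists (fun _ => C0); split; auto. intros; apply Dlin_const. Qed.

Lemma Ck_id k U : Ck k U (fun w => w).
Proof. destruct k; simpl; auto. exists (fun _ => C1); split. intros; apply Dlin_id. apply Ck_const. Qed.

Lemma Ck_add k : forall U f g, Ck k U f -> Ck k U g -> Ck k U (fun w => Cadd (f w) (g w)).
Proof.
  induction k; intros U f g Hf Hg; simpl; auto.
  destruct Hf as [f' [F1 F2]], Hg as [g' [G1 G2]].
  exists (fun w => Cadd (f' w) (g' w)); split. intros; apply Dlin_add; auto. apply IHk; auto.
Qed.

Lemma Ck_mul k : forall U f g, Ck k U f -> Ck k U g -> Ck k U (fun w => Cmul (f w) (g w)).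
Proof.
  induction k; intros U f g Hf Hg; simpl; auto.
  pose proof (Ck_down _ _ _ Hf) as Hf0. pose proof (Ck_down _ _ _ Hg) as Hg0.
  destruct Hf as [f' [F1 F2]], Hg as [g' [G1 G2]].
  exists (fun w => Cadd (Cmul (f' w) (g w)) (Cmul (f w) (g' w))); split.
  intros; apply Dlin_mul; auto.
  apply Ck_add; apply IHk; auto.
Qed.

Lemma Ck_scal k U c f : Ck k U f -> Ck k U (fun w => Cmul c (f w)).
Proof. intros H. apply Ck_mul; auto. apply Ck_const. Qed.

Lemma Ck_comp k : forall (U V : Cx -> Prop) f g, Ck k V f -> Ck k U g -> (forall w, U w -> V (g w)) ->
  Ck k U (fun w => f (g w)).
Proof.
  induction k; intros U V f g Hf Hg HUV; simpl; auto.
  pose proof (Ck_down _ _ _ Hg) as Hg0.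
  destruct Hf as [f' [F1 F2]], Hg as [g' [G1 G2]].
  exists (fun w => Cmul (f' (g w)) (g' w)); split.
  intros w Hw. apply Dlin_comp; auto.
  apply Ck_mul; auto. apply IHk with V; auto.
Qed.

Lemma Ck_Cinv k : Ck k (fun w => w <> C0) Cinv.
Proof.
  induction k; simpl; auto.
  exists (fun w => Cmul (Copp C1) (Cmul (Cinv w) (Cinv w))); split.
  intros w Hw. eapply Dlin_eq_l. apply Dlin_Cinv; auto. cring.
  apply Ck_scal. apply Ck_mul; auto.
Qed.


Lemma Rabs_le_between x a : Rabs x <= a -> - a <= x <= a.
Proof. intros H. pose proof (Rle_abs x). pose proof (Rle_abs (-x)). rewrite Rabs_Ropp in H1. lra. Qed.

Lemma de_moivre t k : Cpow (mkC (cos t) (sin t)) k = mkC (cos (INR k * t)) (sin (INR k * t)).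
Proof.
  induction k.
  - simpl. rewrite Rmult_0_l, cos_0, sin_0. reflexivity.
  - change (Cpow (mkC (cos t) (sin t)) (S k)) with (Cmul (mkC (cos t) (sin t)) (Cpow (mkC (cos t) (sin t)) k)).
    rewrite IHk. rewrite S_INR. replace ((INR k + 1) * t) with (t + INR k * t) by ring.
    rewrite cos_plus, sin_plus. apply Cx_eq; unfold Cmul; simpl; ring.
Qed.

Lemma polar x y : x * x + y * y = 1 -> exists a, - PI <= a <= PI /\ cos a = x /\ sin a = y.
Proof.
  intros H. assert (Hx : -1 <= x <= 1) by (split; nra).
  pose proof (acos_bound x). pose proof (cos_acos x Hx). pose proof (sin_acos x Hx).
  assert (E : sqrt (1 - x²) = Rabs y).
  { rewrite <- sqrt_Rsqr_abs. f_equal. unfold Rsqr. lra. }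
  destruct (Rle_dec 0 y).
  - exists (acos x). split; [lra|]. split; auto. rewrite H2, E, Rabs_pos_eq; auto.
  - exists (- acos x). split; [lra|]. rewrite cos_neg, sin_neg. split; auto.
    rewrite H2, E, Rabs_left; lra.
Qed.

Lemma dir_vec B k : B <> C0 -> (2 <= k)%nat ->
  exists v, nsq v = 1 /\ 0 < Cre v /\ 0 < Cre (Cmul B (Cpow v k)).
Proof.
  intros HB Hk. pose proof (Cnorm_pos B HB) as HnB.
  pose proof (Cnorm_sq B) as HsB.
  destruct (polar (Cre B / Cnorm B) (Cim B / Cnorm B)) as [a [Ha [Hc Hs]]].
  { replace (Cre B / Cnorm B * (Cre B / Cnorm B) + Cim B / Cnorm B * (Cim B / Cnorm B)) with (nsq B / (Cnorm B * Cnorm B)) by (unfold nsq; field; lra). rewrite <- HsB. field. lra. }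
  assert (Hkr : 2 <= INR k) by (replace 2 with (INR 2) by (simpl; ring); apply le_INR; auto).
  set (t := - (3 * a) / (4 * INR k)).
  exists (mkC (cos t) (sin t)). split; [|split].
  - unfold nsq; simpl. rewrite Rplus_comm. apply sin2_cos2.
  - simpl. assert (Ht : -(3 * PI / 8) <= t <= 3 * PI / 8).
      { unfold t. apply Rabs_le_between. unfold Rdiv. rewrite Rabs_mult, Rabs_Ropp, Rabs_mult, Rabs_inv, (Rabs_pos_eq 3) by lra.
        rewrite (Rabs_pos_eq (4 * INR k)) by lra.
        assert (Rabs a <= PI) by (apply Rabs_le; lra).
        apply (Rmult_le_reg_r (4 * INR k)). lra.
        rewrite Rmult_assoc, Rinv_l by lra. pose proof PI_RGT_0. nra. }
    pose proof PI_RGT_0. apply cos_gt_0; lra.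
  - rewrite de_moivre.
    assert (EB : B = mkC (Cnorm B * cos a) (Cnorm B * sin a)).
    { rewrite Hc, Hs. apply Cx_eq; simpl; field; lra. }
    rewrite EB. unfold Cmul; simpl.
    replace (Cnorm B * cos a * cos (INR k * t) - Cnorm B * sin a * sin (INR k * t))
      with (Cnorm B * cos (a + INR k * t)) by (rewrite cos_plus; ring).
    apply Rmult_lt_0_compat; auto.
    replace (a + INR k * t) with (a / 4) by (unfold t; field; lra).
    apply cos_gt_0; pose proof PI_RGT_0; lra.
Qed.

Lemma nsq_add a b : nsq (Cadd a b) = nsq a + 2 * Cre (Cmul (Cconj a) b) + nsq b.
Proof. unfold nsq, Cadd, Cmul, Cconj; simpl; ring. Qed.
Lemma Cpow_mul a b k : Cpow (Cmul a b) k = Cmul (Cpow a k) (Cpow b k).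
Proof. induction k; simpl. cring. rewrite IHk. cring. Qed.
Lemma Cpow_RtoC t k : Cpow (RtoC t) k = RtoC (t ^ k).
Proof. induction k; simpl. reflexivity. rewrite IHk. cring. Qed.
Lemma Cnorm_conj a : Cnorm (Cconj a) = Cnorm a.
Proof. apply Cnorm_eq_sq. unfold nsq, Cconj; simpl; ring. Qed.
Lemma nsq1_Cnorm a : nsq a = 1 -> Cnorm a = 1.
Proof. intros H. unfold Cnorm. change (sqrt (nsq a) = 1). rewrite H. apply sqrt_1. Qed.
Lemma Cnorm1_nsq a : Cnorm a = 1 -> nsq a = 1.
Proof. intros H. rewrite <- Cnorm_sq, H. ring. Qed.
Lemma nsq_lt1 a : nsq a < 1 -> Cnorm a < 1.
Proof. intros H. unfold Cnorm. change (sqrt (nsq a) < 1). rewrite <- sqrt_1. apply sqrt_lt_1_alt. split; auto. apply nsq_ge0. Qed.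
Lemma Cnorm_lt1 a : Cnorm a < 1 -> nsq a < 1.
Proof. intros H. rewrite <- Cnorm_sq. pose proof (Cnorm_ge0 a). nra. Qed.
Lemma neq0_nsq a : nsq a = 1 -> a <> C0.
Proof. intros H E. rewrite E in H. unfold nsq, C0 in H; simpl in H. lra. Qed.

Lemma direction lam zeta k g :
  nsq zeta = 1 -> nsq lam = 1 -> (2 <= k)%nat ->
  small (fun h => Csub (g (Cadd zeta h)) (g zeta)) 0 -> g zeta <> C0 ->
  (forall w, Cnorm w < 1 -> Cnorm (Cadd lam (Cmul (Cpow (Csub w zeta) k) (g w))) < 1) -> False.
Proof.
  intros Hz Hl Hk Hg Hg0 Hself.
  set (B := Cmul (Cmul (Cconj lam) (Cpow (Copp zeta) k)) (g zeta)).
  assert (HB : B <> C0).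
  { unfold B. apply Cmul_neq0; auto. apply Cmul_neq0. apply neq0_nsq. unfold nsq, Cconj in *; simpl; lra.
    apply Cpow_neq0. apply neq0_nsq. unfold nsq, Copp in *; simpl; lra. }
  destruct (dir_vec B k HB Hk) as [v [Hv1 [Hv2 Hv3]]].
  set (kap := Cre (Cmul B (Cpow v k))) in *.
  destruct (Hg (kap/2) ltac:(lra)) as [d [Hd Hdd]].
  set (t := Rmin (d/2) (Cre v)).
  assert (Ht : 0 < t) by (apply Rmin_pos; lra).
  assert (Ht1 : t <= d/2) by apply Rmin_l. assert (Ht2 : t <= Cre v) by apply Rmin_r.
  set (u := Cmul (RtoC t) (Copp (Cmul zeta v))).
  assert (Hu : Cnorm u = t).
  { unfold u. rewrite Cnorm_mul, Cnorm_RtoC, Cnorm_opp, Cnorm_mul, nsq1_Cnorm, nsq1_Cnorm by auto.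
    rewrite Rabs_pos_eq; lra. }
  set (w := Cadd zeta u).
  assert (Hw : Cnorm w < 1).
  { apply nsq_lt1. replace w with (Cmul zeta (Csub C1 (Cmul (RtoC t) v))) by (unfold w, u; cring).
    rewrite nsq_mul, Hz, Rmult_1_l. unfold nsq in *. unfold Csub, Cadd, Copp, Cmul, C1, RtoC; simpl.
    nra. }
  specialize (Hself w Hw). apply Cnorm_lt1 in Hself.
  rewrite nsq_add, Hl in Hself. replace (Csub w zeta) with u in Hself by (unfold w; cring).
  set (Y := Cmul (Cmul (Cconj lam) (Cmul (Cpow (Copp zeta) k) (Cpow v k))) (Csub (g w) (g zeta))).
  assert (E : Cmul (Cconj lam) (Cmul (Cpow u k) (g w)) = Cmul (RtoC (t ^ k)) (Cadd (Cmul B (Cpow v k)) Y)).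
  { unfold u. replace (Copp (Cmul zeta v)) with (Cmul (Copp zeta) v) by cring.
    rewrite !Cpow_mul, Cpow_RtoC. unfold Y, B.
    generalize (Cpow (Copp zeta) k) (Cpow v k) (RtoC (t ^ k)). intros. cring. }
  rewrite E in Hself.
  assert (HY : Cnorm Y <= kap / 2).
  { unfold Y. rewrite !Cnorm_mul, !Cnorm_pow, Cnorm_conj, Cnorm_opp, !nsq1_Cnorm by auto.
    rewrite !pow1, !Rmult_1_l. specialize (Hdd u ltac:(lra)). simpl in Hdd. unfold w. lra. }
  pose proof (Cre_le Y). pose proof (Rle_abs (- Cre Y)). rewrite Rabs_Ropp in H0.
  assert (Cre (Cmul (RtoC (t ^ k)) (Cadd (Cmul B (Cpow v k)) Y)) = t ^ k * (kap + Cre Y)).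
  { unfold kap. unfold RtoC, Cmul, Cadd; simpl. ring. }
  rewrite H1 in Hself. pose proof (pow_lt t k Ht). pose proof (nsq_ge0 (Cmul (Cpow u k) (g w))).
  nra.
Qed.


Lemma Ceq_dec (a b : Cx) : {a = b} + {a <> b}.
Proof. decide equality; apply Req_EM_T. Qed.

Fixpoint padd (a b : list Cx) : list Cx :=
  match a, b with
  | nil, _ => b
  | _, nil => a
  | x :: a', y :: b' => Cadd x y :: padd a' b'
  end.
Lemma peval_padd a : forall b z, peval (padd a b) z = Cadd (peval a z) (peval b z).
Proof.
  induction a; intros b z; destruct b; simpl; try cring.
  rewrite IHa. cring.
Qed.
Definition pscale (c : Cx) (a : list Cx) := map (Cmul c) a.
Lemma peval_pscale c a z : peval (pscale c a) z = Cmul c (peval a z).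
Proof. induction a; simpl. cring. rewrite IHa. cring. Qed.

Fixpoint pdiv (P : list Cx) (a : Cx) : list Cx :=
  match P with
  | nil => nil
  | b :: P' => match P' with nil => nil | _ :: _ => peval P' a :: pdiv P' a end
  end.
Lemma pdiv_spec P a z : peval P z = Cadd (peval P a) (Cmul (Csub z a) (peval (pdiv P a) z)).
Proof.
  induction P as [|b P' IH]; simpl. cring.
  destruct P' as [|c P'']. simpl. cring.
  remember (c :: P'') as Q. simpl. rewrite IH at 1. cring.
Qed.
Lemma pdiv_len P a : length (pdiv P a) = pred (length P).
Proof. induction P as [|b P' IH]; simpl; auto. destruct P'; simpl in *; auto. Qed.

Lemma factor N : forall P a, (length P <= N)%nat -> (exists w, peval P w <> C0) ->
  exists k R, (forall z, peval P z = Cmul (Cpow (Csub z a) k) (peval R z)) /\ peval R a <> C0.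
Proof.
  induction N; intros P a HN [w Hw].
  - destruct P; simpl in HN; [|lia]. simpl in Hw. congruence.
  - destruct (Ceq_dec (peval P a) C0) as [E|E].
    + destruct P as [|b P']. simpl in Hw; congruence.
      assert (HQ : exists w, peval (pdiv (b :: P') a) w <> C0).
      { exists w. intro Q. apply Hw. rewrite (pdiv_spec (b :: P') a w), E, Q. cring. }
      destruct (IHN (pdiv (b :: P') a) a ltac:(rewrite pdiv_len; simpl in *; lia) HQ) as [k [R [HR1 HR2]]].
      exists (S k), R. split; auto. intros z. rewrite (pdiv_spec (b :: P') a z), E, HR1. simpl. cring.
    + exists O, P. split; auto. intros; simpl; cring.
Qed.

Lemma peval_Dlin P : forall z, exists l, Dlin (peval P) z l.
Proof.
  induction P as [|b P IH]; intros z; simpl.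
  - exists C0. apply Dlin_const.
  - destruct (IH z) as [l Hl]. eexists. apply Dlin_add. apply Dlin_const.
    apply Dlin_mul. apply Dlin_id. exact Hl.
Qed.


Lemma Dlin_peval P z : exists l, Dlin (peval P) z l.
Proof. apply peval_Dlin. Qed.

Lemma near_nonzero f z l : Dlin f z l -> f z <> C0 ->
  exists r, 0 < r /\ forall h, Cnorm h < r -> f (Cadd z h) <> C0.
Proof.
  intros H Hz. pose proof (Cnorm_pos _ Hz).
  destruct (Dlin_cont f z l H (Cnorm (f z) / 2) ltac:(lra)) as [d [Hd Hdd]].
  exists d; split; auto. intros h Hh E. specialize (Hdd h Hh). simpl in Hdd.
  rewrite E in Hdd. replace (Csub C0 (f z)) with (Copp (f z)) in Hdd by cring.
  rewrite Cnorm_opp in Hdd. lra.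
Qed.

Lemma partA p q zeta d1 :
  rational_selfmap p q -> Cnorm zeta = 1 ->
  Cnorm (ratfun p q zeta) = 1 ->
  (exists w, Cnorm w <= 1 /\ ratfun p q w <> ratfun p q zeta) ->
  Dlin (ratfun p q) zeta d1 -> d1 <> C0.
Proof.
  intros [Hq Hself] Hz Hl [w0 [Hw0 Hw0n]] Hd.
  set (lam := ratfun p q zeta) in *.
  assert (Hqz : peval q zeta <> C0) by (apply Hq; lra).
  set (P := padd p (pscale (Copp lam) q)).
  assert (HP : forall z, peval P z = Csub (peval p z) (Cmul lam (peval q z))).
  { intros z. unfold P. rewrite peval_padd, peval_pscale. cring. }
  assert (Hphi : forall z, peval q z <> C0 -> ratfun p q z = Cadd lam (Cmul (peval P z) (Cinv (peval q z)))).
  { intros z Hqz'. rewrite HP. unfold ratfun, Cdiv.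
    transitivity (Cadd lam (Csub (Cmul (peval p z) (Cinv (peval q z))) (Cmul lam (Cmul (peval q z) (Cinv (peval q z)))))).
    rewrite Cinv_r by auto. cring. cring. }
  assert (HPz : peval P zeta = C0).
  { pose proof (Hphi zeta Hqz). fold lam in H.
    assert (Cmul (peval P zeta) (Cinv (peval q zeta)) = C0).
    { apply Cx_eq; [apply (f_equal Cre) in H | apply (f_equal Cim) in H]; unfold Cadd in H; simpl in H; unfold C0; simpl; lra. }
    rewrite <- (Cmul_inv_cancel (peval P zeta) (Cinv (peval q zeta))).
    rewrite H0. cring. apply Cinv_neq0; auto. }
  assert (Hnz : exists w, peval P w <> C0).
  { exists w0. intro E. apply Hw0n. rewrite Hphi by (apply Hq; auto). rewrite E. fold lam. cring. }
  destruct (factor (length P) P zeta (le_n _) Hnz) as [k [R [HR1 HR2]]].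
  set (g := fun z => Cmul (peval R z) (Cinv (peval q z))).
  assert (Hphik : forall z, peval q z <> C0 -> ratfun p q z = Cadd lam (Cmul (Cpow (Csub z zeta) k) (g z))).
  { intros z Hqz'. rewrite Hphi, HR1 by auto. unfold g. cring. }
  assert (Hgd : exists l, Dlin g zeta l).
  { destruct (Dlin_peval R zeta) as [l1 H1]. destruct (Dlin_peval q zeta) as [l2 H2].
    eexists. unfold g. apply Dlin_mul. exact H1.
    apply (Dlin_comp Cinv (peval q)). exact H2. apply Dlin_Cinv; auto. }
  destruct Hgd as [lg Hgd].
  assert (Hgc := Dlin_cont g zeta lg Hgd).
  assert (Hg0 : g zeta <> C0) by (unfold g; apply Cmul_neq0; auto; apply Cinv_neq0; auto).
  destruct (Dlin_peval q zeta) as [lq Hlq].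
  destruct (near_nonzero _ _ _ Hlq Hqz) as [rq [Hrq Hrqq]].
  destruct k as [|[|k]].
  - exfalso. apply HR2. rewrite <- HPz, HR1. simpl. cring.
  - assert (Dlin (ratfun p q) zeta (g zeta)).
    { apply small_local with (fun h => Cmul h (Csub (g (Cadd zeta h)) (g zeta))).
      exists rq; split; auto. intros h Hh. rewrite (Hphik (Cadd zeta h)) by auto.
      replace (Csub (Cadd zeta h) zeta) with h by cring. simpl. cring.
      replace 1%nat with (0 + 1)%nat by lia. apply small_mul_bound with 1; auto.
      exists 1; split; [lra|]. intros; simpl; lra. }
    rewrite (Dlin_unique _ _ _ _ Hd H). auto.
  - exfalso. apply (direction lam zeta (S (S k)) g); auto.
    apply Cnorm1_nsq; auto. apply Cnorm1_nsq; auto. lia.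
    intros w Hw. rewrite <- Hphik. apply Hself; auto. apply Hq; lra.
Qed.


Lemma pow_decr x a b : 0 <= x <= 1 -> (b <= a)%nat -> x ^ a <= x ^ b.
Proof.
  intros Hx H. induction H. lra. simpl. pose proof (pow_le x m ltac:(lra)). nra.
Qed.

Lemma Tay_single d i n h : (forall j, j <> i -> d j = C0) -> (i <= n)%nat ->
  Tay d n h = Cmul (Cmul (d i) (RtoC (/ INR (fact i)))) (Cpow h i).
Proof.
  intros Hd. induction n; intros Hi.
  - assert (i = O) by lia; subst. simpl. replace (/ (1)) with 1 by field. cring.
  - destruct (Nat.eq_dec i (S n)).
    + subst. simpl. rewrite Tay_zero. cring. intros j Hj. apply Hd. lia.
    + simpl. rewrite IHn by lia. rewrite (Hd (S n)) by auto. cring.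
Qed.

Lemma Tay_tail c m n : (forall j, (j <= m)%nat -> c j = C0) ->
  exists K, forall h, Cnorm h <= 1 -> Cnorm (Tay c n h) <= K * Cnorm h ^ S m.
Proof.
  intros Hc. induction n.
  - exists 0. intros h _. simpl. rewrite Hc by lia. rewrite Cnorm_C0. lra.
  - destruct IHn as [K HK].
    set (a := Cmul (c (S n)) (RtoC (/ INR (fact (S n))))).
    exists (K + Cnorm a). intros h Hh. change (Tay c (S n) h) with (Cadd (Tay c n h) (Cmul a (Cpow h (S n)))).
    eapply Rle_trans. apply Cnorm_triangle. rewrite Cnorm_mul, Cnorm_pow.
    specialize (HK h Hh). pose proof (Cnorm_ge0 h). pose proof (Cnorm_ge0 a).
    assert (Cnorm a * Cnorm h ^ S n <= Cnorm a * Cnorm h ^ S m).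
    { destruct (le_lt_dec (S n) m).
      - unfold a. rewrite Hc by lia. replace (Cmul C0 (RtoC (/ INR (fact (S n))))) with C0 by cring.
        rewrite Cnorm_C0. lra.
      - apply Rmult_le_compat_l; auto. apply pow_decr; auto. }
    simpl in *. nra.
Qed.

Lemma Bcore E e n C c :
  small (fun h => Csub (E h) (Tay e n h)) n -> 0 < c ->
  (forall d, 0 < d -> exists u, 0 < Cnorm u < d /\ c * Cnorm u ^ n <= Cnorm (E u) <= C * Cnorm u ^ n) ->
  (forall i, (i < n)%nat -> e i = C0) /\ e n <> C0.
Proof.
  intros Hs Hc Ht.
  assert (H1 : forall i, (i < n)%nat -> e i = C0).
  { intros i; induction i as [i IH] using (well_founded_induction lt_wf). intros Hi.
    destruct (Ceq_dec (e i) C0) as [E0|E0]; auto. exfalso.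
    set (e' := fun j => if Nat.eq_dec j i then C0 else e j).
    assert (Hsplit : forall u, Csub (Tay e n u) (Tay e' n u) = Cmul (Cmul (e i) (RtoC (/ INR (fact i)))) (Cpow u i)).
    { intros u. rewrite <- Tay_sub. rewrite (Tay_single _ i) by (first [lia | (intros j Hj; unfold e'; destruct (Nat.eq_dec j i); [congruence|cring])]).
      unfold e'. destruct (Nat.eq_dec i i); [|congruence]. f_equal. f_equal. cring. }
    destruct (Tay_tail e' i n) as [K HK].
    { intros j Hj. unfold e'. destruct (Nat.eq_dec j i); auto. apply IH; lia. }
    destruct (Hs 1 ltac:(lra)) as [d1 [Hd1 Hdd1]].
    set (a := Cnorm (e i) * / INR (fact i)).
    assert (Ha : 0 < a).
    { unfold a. apply Rmult_lt_0_compat. apply Cnorm_pos; auto. apply Rinv_0_lt_compat, INR_fact_pos. }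
    set (Q := Rabs C + 1 + Rabs K).
    assert (HQ : 0 < Q) by (unfold Q; pose proof (Rabs_pos C); pose proof (Rabs_pos K); lra).
    destruct (Ht (Rmin (Rmin d1 1) (a / (2 * Q)))) as [u [[Hu0 Hu1] [HuL HuU]]].
    { apply Rmin_pos. apply Rmin_pos; lra. apply Rdiv_lt_0_compat; lra. }
    pose proof (Rmin_l (Rmin d1 1) (a / (2 * Q))). pose proof (Rmin_r (Rmin d1 1) (a / (2 * Q))).
    pose proof (Rmin_l d1 1). pose proof (Rmin_r d1 1).
    specialize (Hdd1 u ltac:(lra)). specialize (HK u ltac:(lra)).
    specialize (Hsplit u).
    assert (HM : Cnorm (Cmul (Cmul (e i) (RtoC (/ INR (fact i)))) (Cpow u i)) = a * Cnorm u ^ i).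
    { rewrite !Cnorm_mul, Cnorm_RtoC, Cnorm_pow, Rabs_pos_eq. reflexivity.
      left; apply Rinv_0_lt_compat, INR_fact_pos. }
    rewrite <- Hsplit in HM.
    assert (T1 : Cnorm (Csub (Tay e n u) (Tay e' n u)) <= Cnorm (E u) + Cnorm u ^ n + K * Cnorm u ^ S i).
    { replace (Csub (Tay e n u) (Tay e' n u)) with (Cadd (Csub (Tay e n u) (E u)) (Cadd (E u) (Copp (Tay e' n u)))) by cring.
      eapply Rle_trans. apply Cnorm_triangle. rewrite Cnorm_sub_sym.
      eapply Rle_trans. apply Rplus_le_compat_l. apply Cnorm_triangle. rewrite Cnorm_opp. lra. }
    assert (P1 : Cnorm u ^ n <= Cnorm u ^ S i) by (apply pow_decr; [split; [lra|lra]| lia]).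
    assert (0 < Cnorm u ^ i) by (apply pow_lt; lra).
    assert (P2 : C * Cnorm u ^ n <= Rabs C * Cnorm u ^ S i).
    { pose proof (Rle_abs C). pose proof (Rabs_pos C). pose proof (pow_le (Cnorm u) n ltac:(lra)). nra. }
    assert (P3 : K * Cnorm u ^ S i <= Rabs K * Cnorm u ^ S i).
    { pose proof (Rle_abs K). pose proof (pow_le (Cnorm u) (S i) ltac:(lra)). nra. }
    assert (a * Cnorm u ^ i <= Q * Cnorm u ^ S i) by (unfold Q; nra).
    simpl in H4. assert (a <= Q * Cnorm u) by nra.
    assert (Q * Cnorm u < a / 2).
    { apply Rlt_le_trans with (Q * (a / (2 * Q))). apply Rmult_lt_compat_l; lra. right; field; lra. }
    lra. }
  split; auto. intros En.
  assert (Hz : forall h, Tay e n h = C0).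
  { intros h. apply Tay_zero. intros i Hi. destruct (Nat.eq_dec i n). subst; auto. apply H1; lia. }
  destruct (Hs (c/2) ltac:(lra)) as [d [Hd Hdd]].
  destruct (Ht d Hd) as [u [[Hu0 Hu1] [HuL HuU]]].
  specialize (Hdd u Hu1). rewrite Hz in Hdd. replace (Csub (E u) C0) with (E u) in Hdd by cring.
  assert (0 < Cnorm u ^ n) by (apply pow_lt; lra). nra.
Qed.

Lemma circle_pts zeta : Cnorm zeta = 1 -> forall d, 0 < d ->
  exists w, Cnorm w = 1 /\ 0 < Cnorm (Csub w zeta) < d.
Proof.
  intros Hz d Hd. set (t := d / 4).
  assert (Ht : 0 < t) by (unfold t; lra).
  set (E := mkC ((1 - t * t) / (1 + t * t)) (2 * t / (1 + t * t))).
  assert (HE : nsq E = 1) by (unfold E, nsq; simpl; field; nra).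
  exists (Cmul zeta E). split.
  - rewrite Cnorm_mul, Hz, nsq1_Cnorm; auto. ring.
  - replace (Csub (Cmul zeta E) zeta) with (Cmul zeta (Csub E C1)) by cring.
    rewrite Cnorm_mul, Hz, Rmult_1_l.
    assert (HE1 : nsq (Csub E C1) = 4 * (t * t) / (1 + t * t)).
    { unfold E, nsq, Csub, Cadd, Copp, C1; simpl. field. nra. }
    split.
    + apply Cnorm_pos. intro X. rewrite X in HE1. unfold nsq, C0 in HE1; simpl in HE1.
      assert (0 < 4 * (t * t) / (1 + t * t)) by (apply Rdiv_lt_0_compat; nra). lra.
    + apply Rle_lt_trans with (2 * t). apply Cnorm_le_sq. lra. rewrite HE1.
      apply (Rmult_le_reg_r (1 + t * t)). nra. unfold Rdiv. rewrite Rmult_assoc, Rinv_l by nra. nra.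
      unfold t; lra.
Qed.

Lemma rho_unit w : nsq w = 1 -> rho w = w.
Proof. intros H. unfold nsq in H. unfold rho, Cinv, Cconj. destruct w as [a b]; simpl in *.
  apply Cx_eq; simpl; replace (a * a + - b * - b) with 1 by lra; field. Qed.

Lemma Cnorm_pow2 a : Cnorm a ^ 2 = nsq a.
Proof. rewrite <- Cnorm_sq. ring. Qed.


Lemma partB_bounds f zeta n d1 m M eps0 :
  Cnorm zeta = 1 -> Cnorm (f zeta) = 1 -> d1 <> C0 -> Dlin f zeta d1 -> 0 < m -> 0 < eps0 ->
  (forall w, Cnorm w = 1 -> 0 < Cnorm (Csub w zeta) < eps0 ->
     f w <> f zeta /\ m <= (1 - Cnorm (f w) ^ 2) / (Cnorm (Csub (f zeta) (f w))) ^ n <= M) ->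
  exists rho0 c C, 0 < rho0 /\ 0 < c /\ forall w, Cnorm w = 1 -> 0 < Cnorm (Csub w zeta) < rho0 ->
    c * Cnorm (Csub w zeta) ^ n <= Cnorm (Csub (reflect_map f w) (f w)) <= C * Cnorm (Csub w zeta) ^ n.
Proof.
  intros Hz Hl Hd1 Hd Hm He Hord.
  set (lam := f zeta) in *.
  pose proof (Cnorm_pos _ Hd1) as Hn1.
  destruct (Hd (Cnorm d1 / 2) ltac:(lra)) as [d [Hd0 Hdd]].
  set (rho0 := Rmin (Rmin eps0 d) (/ (3 * Cnorm d1))).
  assert (Hr0 : 0 < rho0) by (apply Rmin_pos; [apply Rmin_pos; lra| apply Rinv_0_lt_compat; lra]).
  exists rho0, (m * (Cnorm d1 / 2) ^ n), (2 * M * (3 * Cnorm d1 / 2) ^ n).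
  split; auto. split. apply Rmult_lt_0_compat; auto. apply pow_lt; lra.
  intros w Hw [Hu0 Hu1].
  pose proof (Rmin_l (Rmin eps0 d) (/ (3 * Cnorm d1))) as R1.
  pose proof (Rmin_r (Rmin eps0 d) (/ (3 * Cnorm d1))) as R2.
  pose proof (Rmin_l eps0 d) as R3. pose proof (Rmin_r eps0 d) as R4.
  fold rho0 in R1, R2.
  set (u := Csub w zeta) in *.
  specialize (Hdd u ltac:(lra)). simpl in Hdd. rewrite Rmult_1_r in Hdd.
  replace (Cadd zeta u) with w in Hdd by (unfold u; cring). fold lam in Hdd.
  destruct (Hord w Hw ltac:(fold u; lra)) as [Hne [HmX HXM]].
  set (Y := Cnorm (Csub lam (f w))) in *.
  assert (HY1 : Cnorm d1 / 2 * Cnorm u <= Y).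
  { assert (Cmul d1 u = Csub (Csub (f w) lam) (Csub (Csub (f w) lam) (Cmul d1 u))) by cring.
    pose proof (Cnorm_sub_triangle (Csub (f w) lam) (Csub (Csub (f w) lam) (Cmul d1 u))).
    rewrite <- H, Cnorm_mul in H0. unfold Y. rewrite Cnorm_sub_sym. lra. }
  assert (HY2 : Y <= 3 * Cnorm d1 / 2 * Cnorm u).
  { assert (Csub (f w) lam = Cadd (Csub (Csub (f w) lam) (Cmul d1 u)) (Cmul d1 u)) by cring.
    pose proof (Cnorm_triangle (Csub (Csub (f w) lam) (Cmul d1 u)) (Cmul d1 u)).
    rewrite <- H, Cnorm_mul in H0. unfold Y. rewrite Cnorm_sub_sym. lra. }
  assert (HYp : 0 < Y) by (unfold Y; apply Cnorm_pos; intro E; apply Hne;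
                            apply Cx_eq; unfold Csub, Cadd, Copp, C0 in E; injection E; intros; lra).
  assert (HYn : 0 < Y ^ n) by (apply pow_lt; auto).
  set (X := 1 - Cnorm (f w) ^ 2) in *.
  assert (HX1 : m * Y ^ n <= X).
  { apply (Rmult_le_compat_r (Y ^ n)) in HmX; [|lra]. unfold Rdiv in HmX.
    rewrite Rmult_assoc, Rinv_l in HmX by lra. lra. }
  assert (HX2 : X <= M * Y ^ n).
  { apply (Rmult_le_compat_r (Y ^ n)) in HXM; [|lra]. unfold Rdiv in HXM.
    rewrite Rmult_assoc, Rinv_l in HXM by lra. lra. }
  assert (HXp : 0 < X) by nra.
  assert (Hfw1 : Cnorm (f w) < 1).
  { unfold X in HXp. pose proof (Cnorm_ge0 (f w)). simpl in HXp. nra. }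
  assert (Hfw2 : 1 / 2 <= Cnorm (f w)).
  { pose proof (Cnorm_rev_triangle lam (f w)). fold Y in H.
    assert (3 * Cnorm d1 / 2 * Cnorm u <= 1/2).
    { assert (Cnorm u <= / (3 * Cnorm d1)) by lra.
      apply Rle_trans with (3 * Cnorm d1 / 2 * / (3 * Cnorm d1)). apply Rmult_le_compat_l; lra.
      right; field; lra. }
    lra. }
  assert (Hfw0 : f w <> C0) by (intro E; rewrite E, Cnorm_C0 in Hfw2; lra).
  assert (HD : Cmul (Csub (reflect_map f w) (f w)) (Cconj (f w)) = RtoC X).
  { unfold reflect_map. rewrite (rho_unit w) by (apply Cnorm1_nsq; auto).
    unfold rho. assert (Hc : Cconj (f w) <> C0).
    { intro E. apply Hfw0. apply Cx_eq; unfold Cconj, C0 in *; injection E; simpl; intros; lra. }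
    transitivity (Csub (Cmul (Cinv (Cconj (f w))) (Cconj (f w))) (Cmul (f w) (Cconj (f w)))). cring.
    rewrite Cinv_l by auto. unfold X. rewrite Cnorm_pow2. unfold nsq. cring. }
  assert (HDn : Cnorm (Csub (reflect_map f w) (f w)) * Cnorm (f w) = X).
  { rewrite <- (Cnorm_conj (f w)), <- Cnorm_mul, HD, Cnorm_RtoC, Rabs_pos_eq; lra. }
  set (Dn := Cnorm (Csub (reflect_map f w) (f w))) in *.
  pose proof (Cnorm_ge0 u).
  assert (P1 : (Cnorm d1 / 2) ^ n * Cnorm u ^ n <= Y ^ n).
  { rewrite <- Rpow_mult_distr. apply pow_incr. split; [|lra]. pose proof (Cnorm_ge0 d1). nra. }
  assert (P2 : Y ^ n <= (3 * Cnorm d1 / 2) ^ n * Cnorm u ^ n).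
  { rewrite <- Rpow_mult_distr. apply pow_incr. split; lra. }
  assert (0 <= Dn) by apply Cnorm_ge0.
  split.
  - assert (X <= Dn) by nra. nra.
  - assert (Dn <= 2 * X) by nra.
    assert (0 <= M) by (assert (0 < M * Y ^ n) by lra; nra). nra.
Qed.


Lemma jet_data f z n d : has_jet f z n d ->
  exists r g, 0 < r /\ chain g n (ball z r) /\ (forall w, ball z r w -> g O w = f w) /\
    (forall k, (k <= n)%nat -> g k z = d k).
Proof.
  intros [r [g [[Hr [H0 H1]] H2]]]. exists r, g. repeat split; auto.
  intros k w Hk Hw. apply Cderiv_Dlin. apply H1; auto.
Qed.

Lemma jet_peano f z n d : has_jet f z n d -> (0 < n)%nat ->
  small (fun h => Csub (f (Cadd z h)) (Tay d n h)) n.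
Proof.
  intros H Hn. destruct (jet_data f z n d H) as [r [g [Hr [Hc [H0 Hv]]]]].
  destruct n as [|m]; [lia|].
  pose proof (peano m g z r Hr Hc) as P.
  apply small_local with (2 := P). exists r; split; auto. intros h Hh.
  rewrite H0. rewrite (Tay_ext _ d) by auto. reflexivity.
  unfold ball. replace (Csub (Cadd z h) z) with h by cring. auto.
Qed.

Lemma jet_Dlin f z n d : has_jet f z n d -> (0 < n)%nat -> Dlin f z (d 1%nat) /\ f z = d O.
Proof.
  intros H Hn. destruct (jet_data f z n d H) as [r [g [Hr [Hc [H0 Hv]]]]].
  split.
  - rewrite <- Hv by lia. apply (Dlin_local (g O) f z (g 1%nat z) r Hr).
    intros w Hw; apply H0; auto. apply Hc; auto. apply ball_center; auto.
  - rewrite <- Hv by lia. symmetry; apply H0, ball_center; auto.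
Qed.

Lemma make_jet f z n d r : 0 < r -> (0 < n)%nat -> Ck n (ball z r) f ->
  small (fun h => Csub (f (Cadd z h)) (Tay d n h)) n -> has_jet f z n d.
Proof.
  intros Hr Hn HC Hs. destruct (Ck_chain n _ _ HC) as [g [Hg0 Hg]].
  exists r, g. split.
  - split; auto. split. intros w _; rewrite Hg0; auto.
    intros k w Hk Hw. apply Cderiv_Dlin. apply Hg; auto.
  - intros k Hk. destruct n as [|m]; [lia|].
    pose proof (peano m g z r Hr Hg) as P. rewrite Hg0 in P.
    apply (Tay_unique (fun h => f (Cadd z h)) (fun i => g i z) d (S m) P Hs k Hk).
Qed.

Lemma ball_convex z d a b s : ball z d a -> ball z d b -> 0 <= s <= 1 ->
  ball z d (Cadd b (Cmul (RtoC s) (Csub a b))).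
Proof.
  unfold ball. intros Ha Hb Hs.
  replace (Csub (Cadd b (Cmul (RtoC s) (Csub a b))) z) with
    (Cadd (Cmul (RtoC s) (Csub a z)) (Cmul (RtoC (1 - s)) (Csub b z))) by cring.
  eapply Rle_lt_trans. apply Cnorm_triangle. rewrite !Cnorm_mul, !Cnorm_RtoC, !Rabs_pos_eq by lra.
  pose proof (Cnorm_ge0 (Csub a z)). pose proof (Cnorm_ge0 (Csub b z)).
  destruct (Req_dec s 0). subst. nra. nra.
Qed.

Lemma strict_diff g r z : 0 < r -> chain g 2 (ball z r) ->
  forall eps, 0 < eps -> exists del, 0 < del /\ del <= r /\ forall a b, ball z del a -> ball z del b ->
    Cnorm (Csub (Csub (g O a) (g O b)) (Cmul (g 1%nat z) (Csub a b))) <= eps * Cnorm (Csub a b).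
Proof.
  intros Hr Hc eps He.
  assert (H1 : Dlin (g 1%nat) z (g 2%nat z)) by (apply Hc; auto; apply ball_center; auto).
  destruct (Dlin_cont _ _ _ H1 (eps/2) ltac:(lra)) as [d [Hd Hdd]].
  exists (Rmin d r). split. apply Rmin_pos; auto. split. apply Rmin_r.
  intros a b Ha Hb. pose proof (Rmin_l d r); pose proof (Rmin_r d r).
  set (F := fun w => Csub (g O w) (Cmul (g 1%nat z) w)).
  set (F' := fun w => Csub (g 1%nat w) (g 1%nat z)).
  pose proof (MVT_C F F' b (Csub a b) (eps/2)) as HM.
  assert (Hs : forall s, 0 <= s <= 1 -> ball z (Rmin d r) (Cadd b (Cmul (RtoC s) (Csub a b))))
    by (intros; apply ball_convex; auto).
  specialize (HM ltac:(intros s Hs'; unfold F, F'; eapply Dlin_eq_l;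
    [apply Dlin_sub; [apply Hc; [lia| specialize (Hs s Hs'); unfold ball in *; lra] | apply Dlin_scal; apply Dlin_id] | cring])).
  specialize (HM ltac:(intros s Hs'; unfold F'; specialize (Hs s Hs'); unfold ball in Hs;
    specialize (Hdd (Csub (Cadd b (Cmul (RtoC s) (Csub a b))) z) ltac:(lra));
    simpl in Hdd; replace (Cadd z (Csub (Cadd b (Cmul (RtoC s) (Csub a b))) z)) with (Cadd b (Cmul (RtoC s) (Csub a b))) in Hdd by cring; lra)).
  replace (Cadd b (Csub a b)) with a in HM by cring.
  unfold F in HM. replace (Csub (Csub (g O a) (Cmul (g 1%nat z) a)) (Csub (g O b) (Cmul (g 1%nat z) b)))
    with (Csub (Csub (g O a) (g O b)) (Cmul (g 1%nat z) (Csub a b))) in HM by cring.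
  lra.
Qed.

Lemma pow_diff a b k M : Cnorm a <= M -> Cnorm b <= M ->
  Cnorm (Csub (Cpow a (S k)) (Cpow b (S k))) <= INR (S k) * M ^ k * Cnorm (Csub a b).
Proof.
  intros Ha Hb. pose proof (Cnorm_ge0 a). assert (0 <= M) by lra.
  induction k.
  - simpl. replace (Csub (Cmul a C1) (Cmul b C1)) with (Csub a b) by cring. lra.
  - replace (Csub (Cpow a (S (S k))) (Cpow b (S (S k)))) with
      (Cadd (Cmul a (Csub (Cpow a (S k)) (Cpow b (S k)))) (Cmul (Cpow b (S k)) (Csub a b))) by (simpl; cring).
    eapply Rle_trans. apply Cnorm_triangle. rewrite !Cnorm_mul, Cnorm_pow.
    pose proof (Cnorm_ge0 (Csub (Cpow a (S k)) (Cpow b (S k)))). pose proof (Cnorm_ge0 (Csub a b)).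
    pose proof (Cnorm_ge0 b).
    assert (Cnorm b ^ S k <= M ^ S k) by (apply pow_incr; lra).
    assert (Cnorm a * Cnorm (Csub (Cpow a (S k)) (Cpow b (S k))) <= M * (INR (S k) * M ^ k * Cnorm (Csub a b))).
    { apply Rmult_le_compat; auto. }
    rewrite (S_INR (S k)). simpl in *. nra.
Qed.

Lemma small_le F E j m K :
  (exists r, 0 < r /\ forall h, Cnorm h < r -> Cnorm (F h) <= K * Cnorm h ^ m * Cnorm (E h)) ->
  small E j -> small F (j + m).
Proof.
  intros [r [Hr HF]] S eps He.
  set (K' := Rabs K + 1).
  assert (HK' : 0 < K') by (unfold K'; pose proof (Rabs_pos K); lra).
  destruct (S (eps / K') ltac:(apply Rdiv_lt_0_compat; lra)) as [d [Hd HE]].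
  exists (Rmin d r); split. apply Rmin_pos; auto.
  intros h Hl. pose proof (Rmin_l d r); pose proof (Rmin_r d r).
  specialize (HE h ltac:(lra)); specialize (HF h ltac:(lra)).
  rewrite pow_add.
  pose proof (pow_le (Cnorm h) j (Cnorm_ge0 h)); pose proof (pow_le (Cnorm h) m (Cnorm_ge0 h)).
  pose proof (Cnorm_ge0 (E h)).
  assert (K <= K') by (unfold K'; pose proof (Rle_abs K); lra).
  apply Rle_trans with (K' * Cnorm h ^ m * (eps / K' * Cnorm h ^ j)).
  apply Rle_trans with (K * Cnorm h ^ m * Cnorm (E h)); auto.
  apply Rle_trans with (K' * Cnorm h ^ m * Cnorm (E h)). apply Rmult_le_compat_r; auto. apply Rmult_le_compat_r; auto.
  apply Rmult_le_compat_l; auto. nra.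
  right. field. lra.
Qed.

Lemma Tay_jet_form z0 L n h : (2 <= n)%nat ->
  Tay (jet_form z0 L n) n h = Cadd (Cadd z0 h) (Cmul (Cmul L (RtoC (/ INR (fact n)))) (Cpow h n)).
Proof.
  intros Hn.
  assert (Aux : forall m, (1 <= m)%nat -> (m < n)%nat -> Tay (jet_form z0 L n) m h = Cadd z0 h).
  { intros m Hm1 Hm2. induction m. lia. destruct m.
    - simpl. replace (/ (1)) with 1 by field. cring.
    - change (Tay (jet_form z0 L n) (S (S m)) h) with
        (Cadd (Tay (jet_form z0 L n) (S m) h) (Cmul (Cmul (jet_form z0 L n (S (S m))) (RtoC (/ INR (fact (S (S m)))))) (Cpow h (S (S m))))).
      rewrite IHm by lia. unfold jet_form.
      destruct (Nat.eqb (S (S m)) n) eqn:E. apply Nat.eqb_eq in E. lia. cring. }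
  destruct n as [|[|n']]; try lia.
  change (Tay (jet_form z0 L (S (S n'))) (S (S n')) h) with
    (Cadd (Tay (jet_form z0 L (S (S n'))) (S n') h) (Cmul (Cmul (jet_form z0 L (S (S n')) (S (S n'))) (RtoC (/ INR (fact (S (S n')))))) (Cpow h (S (S n'))))).
  rewrite Aux by lia. unfold jet_form. rewrite Nat.eqb_refl. reflexivity.
Qed.


Definition strictD (fe : Cx -> Cx) (z d1 : Cx) :=
  forall eps, 0 < eps -> exists del, 0 < del /\ forall a b, ball z del a -> ball z del b ->
    Cnorm (Csub (Csub (fe a) (fe b)) (Cmul d1 (Csub a b))) <= eps * Cnorm (Csub a b).

Lemma small_from_strict (X Y : Cx -> Cx) n C :
  (exists r, 0 < r /\ forall h, Cnorm h < r -> Cnorm (Y h) <= C * Cnorm h ^ n) ->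
  (forall eps, 0 < eps -> exists r, 0 < r /\ forall h, Cnorm h < r -> Cnorm (X h) <= eps * Cnorm (Y h)) ->
  small X n.
Proof.
  intros [r0 [Hr0 HY]] HX eps He.
  set (C' := Rabs C + 1). assert (0 < C') by (unfold C'; pose proof (Rabs_pos C); lra).
  destruct (HX (eps / C') ltac:(apply Rdiv_lt_0_compat; lra)) as [r1 [Hr1 H1]].
  exists (Rmin r0 r1); split. apply Rmin_pos; auto.
  intros h Hh. pose proof (Rmin_l r0 r1); pose proof (Rmin_r r0 r1).
  specialize (HY h ltac:(lra)); specialize (H1 h ltac:(lra)).
  pose proof (pow_le (Cnorm h) n (Cnorm_ge0 h)).
  assert (C <= C') by (unfold C'; pose proof (Rle_abs C); lra).
  eapply Rle_trans. exact H1.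
  apply Rle_trans with (eps / C' * (C' * Cnorm h ^ n)).
  apply Rmult_le_compat_l. left; apply Rdiv_lt_0_compat; lra. nra.
  right; field; lra.
Qed.

Lemma small0_ball f z0 : small (fun h => Csub (f h) z0) 0 -> forall d, 0 < d ->
  exists r, 0 < r /\ forall h, Cnorm h < r -> ball z0 d (f h).
Proof.
  intros S d Hd. destruct (S (d/2) ltac:(lra)) as [r [Hr H]]. exists r; split; auto.
  intros h Hh. specialize (H h Hh). simpl in H. unfold ball. lra.
Qed.

Lemma expand_psi (phi phie psi : Cx -> Cx) zeta d1 K n :
  d1 <> C0 -> strictD phie zeta d1 ->
  small (fun h => Csub (Csub (phie (Cadd zeta h)) (phi (Cadd zeta h))) (Cmul K (Cpow h n))) n ->
  small (fun h => Csub (psi (Cadd zeta h)) zeta) 0 ->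
  (exists r, 0 < r /\ forall h, Cnorm h < r -> phie (psi (Cadd zeta h)) = phi (Cadd zeta h)) ->
  small (fun h => Csub (psi (Cadd zeta h)) (Cadd (Cadd zeta h) (Cmul (Cmul (Copp K) (Cinv d1)) (Cpow h n)))) n.
Proof.
  intros Hd1 Hst HD Hc [rid [Hrid Hid]].
  pose proof (Cnorm_pos _ Hd1) as Hn1.
  set (Dh := fun h => Csub (phie (Cadd zeta h)) (phi (Cadd zeta h))).
  set (Del := fun h => Csub (psi (Cadd zeta h)) (Cadd zeta h)).
  set (X1 := fun h => Cadd (Cmul d1 (Del h)) (Dh h)).
  assert (Key : forall eps, 0 < eps -> exists r, 0 < r /\ forall h, Cnorm h < r -> Cnorm (X1 h) <= eps * Cnorm (Del h)).
  { intros eps He. destruct (Hst eps He) as [del [Hdel Hs]].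
    destruct (small0_ball _ _ Hc del Hdel) as [ra [Hra Ha]].
    exists (Rmin (Rmin ra rid) del); split. repeat apply Rmin_pos; auto.
    intros h Hh. pose proof (Rmin_l (Rmin ra rid) del); pose proof (Rmin_r (Rmin ra rid) del).
    pose proof (Rmin_l ra rid); pose proof (Rmin_r ra rid).
    specialize (Hs (psi (Cadd zeta h)) (Cadd zeta h) (Ha h ltac:(lra))).
    assert (ball zeta del (Cadd zeta h)) by (unfold ball; replace (Csub (Cadd zeta h) zeta) with h by cring; lra).
    specialize (Hs H3). rewrite Hid in Hs by lra.
    replace (Csub (Csub (phi (Cadd zeta h)) (phie (Cadd zeta h))) (Cmul d1 (Csub (psi (Cadd zeta h)) (Cadd zeta h))))
      with (Copp (X1 h)) in Hs by (unfold X1, Del, Dh; cring).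
    rewrite Cnorm_opp in Hs. exact Hs. }
  assert (Hbd : exists r, 0 < r /\ forall h, Cnorm h < r -> Cnorm (Del h) <= (2 / Cnorm d1 * (Cnorm K + 1)) * Cnorm h ^ n).
  { destruct (Key (Cnorm d1 / 2) ltac:(lra)) as [r1 [Hr1 H1]].
    destruct (HD 1 ltac:(lra)) as [r2 [Hr2 H2]].
    exists (Rmin r1 r2); split. apply Rmin_pos; auto.
    intros h Hh. pose proof (Rmin_l r1 r2); pose proof (Rmin_r r1 r2).
    specialize (H1 h ltac:(lra)); specialize (H2 h ltac:(lra)).
    assert (HDb : Cnorm (Dh h) <= (Cnorm K + 1) * Cnorm h ^ n).
    { replace (Dh h) with (Cadd (Csub (Dh h) (Cmul K (Cpow h n))) (Cmul K (Cpow h n))) by cring.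
      eapply Rle_trans. apply Cnorm_triangle. rewrite Cnorm_mul, Cnorm_pow. change (Cnorm (Csub (Dh h) (Cmul K (Cpow h n))) <= 1 * Cnorm h ^ n) in H2. lra. }
    assert (Cnorm d1 * Cnorm (Del h) <= Cnorm (X1 h) + Cnorm (Dh h)).
    { rewrite <- Cnorm_mul. replace (Cmul d1 (Del h)) with (Csub (X1 h) (Dh h)) by (unfold X1; cring).
      apply Cnorm_sub_triangle. }
    apply (Rmult_le_reg_l (Cnorm d1 / 2)). lra.
    replace (Cnorm d1 / 2 * (2 / Cnorm d1 * (Cnorm K + 1) * Cnorm h ^ n)) with ((Cnorm K + 1) * Cnorm h ^ n) by (field; lra).
    lra. }
  assert (SX1 : small X1 n).
  { destruct Hbd as [r [Hr Hb]]. apply small_from_strict with Del (2 / Cnorm d1 * (Cnorm K + 1)); eauto. }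
  assert (SX : small (fun h => Cmul (Cinv d1) (Csub (X1 h) (Csub (Dh h) (Cmul K (Cpow h n))))) n).
  { apply small_scal. apply small_sub; auto. }
  eapply small_ext; [|exact SX]. intros h. unfold X1, Del, Dh.
  transitivity (Cadd (Cmul (Cmul (Cinv d1) d1) (Csub (psi (Cadd zeta h)) (Cadd zeta h))) (Cmul (Cinv d1) (Cmul K (Cpow h n)))).
  cring. rewrite Cinv_l by auto. cring.
Qed.

Lemma expand_chi (phi phie sigma : Cx -> Cx) zeta lam d1 K k :
  d1 <> C0 -> strictD phie zeta d1 ->
  small (fun h => Csub (Csub (phie (Cadd zeta h)) (phi (Cadd zeta h))) (Cmul K (Cpow h (S k)))) (S k) ->
  small (fun h => Csub (sigma (Cadd lam h)) zeta) 0 ->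
  phie zeta = lam ->
  (exists r, 0 < r /\ forall h, Cnorm h < r -> phie (sigma (Cadd lam h)) = Cadd lam h) ->
  small (fun h => Csub (phi (sigma (Cadd lam h))) (Cadd (Cadd lam h) (Cmul (Cmul (Copp K) (Cpow (Cinv d1) (S k))) (Cpow h (S k))))) (S k).
Proof.
  intros Hd1 Hst HD Hc Hez [rid [Hrid Hid]].
  pose proof (Cnorm_pos _ Hd1) as Hn1.
  set (v := fun h => Csub (sigma (Cadd lam h)) zeta).
  set (X3 := fun h => Csub (Cmul d1 (v h)) h).
  assert (Key : forall eps, 0 < eps -> exists r, 0 < r /\ forall h, Cnorm h < r -> Cnorm (X3 h) <= eps * Cnorm (v h)).
  { intros eps He. destruct (Hst eps He) as [del [Hdel Hs]].
    destruct (small0_ball _ _ Hc del Hdel) as [ra [Hra Ha]].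
    exists (Rmin ra rid); split. apply Rmin_pos; auto.
    intros h Hh. pose proof (Rmin_l ra rid); pose proof (Rmin_r ra rid).
    specialize (Hs (sigma (Cadd lam h)) zeta (Ha h ltac:(lra)) (ball_center zeta del Hdel)).
    rewrite Hid, Hez in Hs by lra.
    replace (Csub (Csub (Cadd lam h) lam) (Cmul d1 (Csub (sigma (Cadd lam h)) zeta))) with (Copp (X3 h)) in Hs
      by (unfold X3, v; cring).
    rewrite Cnorm_opp in Hs. exact Hs. }
  assert (Hbd : exists r, 0 < r /\ forall h, Cnorm h < r -> Cnorm (v h) <= (2 / Cnorm d1) * Cnorm h).
  { destruct (Key (Cnorm d1 / 2) ltac:(lra)) as [r1 [Hr1 H1]].
    exists r1; split; auto. intros h Hh. specialize (H1 h Hh).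
    assert (Cnorm d1 * Cnorm (v h) <= Cnorm (X3 h) + Cnorm h).
    { rewrite <- Cnorm_mul. replace (Cmul d1 (v h)) with (Cadd (X3 h) h) by (unfold X3; cring).
      apply Cnorm_triangle. }
    apply (Rmult_le_reg_l (Cnorm d1 / 2)). lra.
    replace (Cnorm d1 / 2 * (2 / Cnorm d1 * Cnorm h)) with (Cnorm h) by (field; lra). lra. }
  destruct Hbd as [rb [Hrb Hb]].
  assert (SX3 : small X3 1).
  { apply small_from_strict with v (2 / Cnorm d1). exists rb; split; auto.
    intros h Hh; rewrite pow_1; auto. auto. }
  set (w := fun h => Cmul (Cinv d1) h).
  assert (Svw : small (fun h => Csub (v h) (w h)) 1).
  { eapply small_ext; [|apply (small_scal (Cinv d1) _ _ SX3)]. intros h. unfold X3, w.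
    transitivity (Csub (Cmul (Cmul (Cinv d1) d1) (v h)) (Cmul (Cinv d1) h)). cring.
    rewrite Cinv_l by auto. cring. }
  assert (Spow : small (fun h => Csub (Cpow (v h) (S k)) (Cpow (w h) (S k))) (S k)).
  { replace (S k) with (1 + k)%nat by lia.
    apply (small_le _ (fun h => Csub (v h) (w h)) 1 k (INR (S k) * (2 / Cnorm d1) ^ k)).
    exists rb; split; auto. intros h Hh.
    assert (Hw : Cnorm (w h) <= 2 / Cnorm d1 * Cnorm h).
    { unfold w. rewrite Cnorm_mul, Cnorm_Cinv by auto. pose proof (Cnorm_ge0 h).
      assert (/ Cnorm d1 <= 2 / Cnorm d1) by (unfold Rdiv; pose proof (Rinv_0_lt_compat _ Hn1); lra). nra. }
    eapply Rle_trans. apply pow_diff. apply Hb; auto. exact Hw.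
    rewrite Rpow_mult_distr. right; ring. exact Svw. }
  assert (SDc : small (fun h => Csub (Csub (phie (Cadd zeta (v h))) (phi (Cadd zeta (v h)))) (Cmul K (Cpow (v h) (S k)))) (S k)).
  { apply (small_comp _ (S k) v (2 / Cnorm d1) HD). exists rb; split; auto. }
  assert (S2 : small (fun h => Cadd (Copp (Csub (Csub (phie (Cadd zeta (v h))) (phi (Cadd zeta (v h)))) (Cmul K (Cpow (v h) (S k)))))
                                   (Copp (Cmul K (Csub (Cpow (v h) (S k)) (Cpow (w h) (S k)))))) (S k)).
  { apply small_add; apply small_opp; auto. apply small_scal; auto. }
  apply small_local with (2 := S2). exists rid; split; auto. intros h Hh.
  assert (E1 : Cadd zeta (v h) = sigma (Cadd lam h)) by (unfold v; cring).
  rewrite E1, Hid by auto. unfold w. rewrite Cpow_mul. cring.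
Qed.


Theorem mainTheorem9 (p q : list Cx) (zeta : Cx) (n : nat) (sigma : Cx -> Cx) :
  rational_selfmap p q ->
  (0 < n)%nat -> Nat.Even n ->
  order_of_contact (ratfun p q) zeta n ->
  (exists r, 0 < r /\ holo_on_disc sigma (ratfun p q zeta) r /\
     sigma (ratfun p q zeta) = zeta /\
     forall w, Cnorm (Csub w (ratfun p q zeta)) < r ->
       reflect_map (ratfun p q) (sigma w) = w) ->
  forall dphi dphie : nat -> Cx,
    has_jet (ratfun p q) zeta n dphi ->
    has_jet (reflect_map (ratfun p q)) zeta n dphie ->
    let lambda := ratfun p q zeta in
    let c := Csub (dphi n) (dphie n) in
    c <> C0 /\
    has_jet (fun z => sigma (ratfun p q z)) zeta n
      (jet_form zeta (Cdiv c (dphi 1%nat)) n) /\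
    has_jet (fun w => ratfun p q (sigma w)) lambda n
      (jet_form lambda (Cdiv c (Cpow (dphi 1%nat) n)) n).
Proof.
  intros Hrat Hn0 Hev [Hz [Hl [eps0 [m [M [He0 [Hm Hordb]]]]]]] Hsig dphi dphie Hjp Hje lambda c.
  set (phi := ratfun p q) in *.
  set (phie := reflect_map phi) in *.
  assert (Hn2 : (2 <= n)%nat) by (destruct Hev as [k Hk]; lia).
  destruct (jet_Dlin _ _ _ _ Hjp Hn0) as [HpD Hp0].
  destruct (jet_Dlin _ _ _ _ Hje Hn0) as [HeD He0'].
  pose proof (jet_peano _ _ _ _ Hjp Hn0) as Pp.
  pose proof (jet_peano _ _ _ _ Hje Hn0) as Pe.
  assert (Hd1 : dphi 1%nat <> C0).
  { apply (partA p q zeta); auto.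
    destruct (circle_pts zeta Hz eps0 He0) as [w [Hw1 Hw2]]. exists w. split. lra.
    apply (Hordb w Hw1 Hw2). }
  destruct (partB_bounds phi zeta n (dphi 1%nat) m M eps0 Hz Hl Hd1 HpD Hm He0 Hordb)
    as [rho0 [cB [CB [Hrho0 [HcB HB]]]]].
  set (e := fun i => Csub (dphie i) (dphi i)).
  assert (HSD : small (fun h => Csub (Csub (phie (Cadd zeta h)) (phi (Cadd zeta h))) (Tay e n h)) n).
  { eapply small_ext; [|apply (small_sub _ _ _ Pe Pp)]. intros h; simpl. unfold e. rewrite Tay_sub. cring. }
  destruct (Bcore (fun h => Csub (phie (Cadd zeta h)) (phi (Cadd zeta h))) e n CB cB HSD HcB) as [HB1 HB2].
  { intros d Hd. destruct (circle_pts zeta Hz (Rmin d rho0) ltac:(apply Rmin_pos; lra)) as [w [Hw1 [Hw2 Hw3]]].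
    pose proof (Rmin_l d rho0); pose proof (Rmin_r d rho0).
    exists (Csub w zeta). replace (Cadd zeta (Csub w zeta)) with w by cring.
    split. lra. apply HB; auto; lra. }
  assert (Hc0 : c <> C0).
  { intro E. apply HB2. unfold e. change (Csub (dphi n) (dphie n) = C0) in E.
    apply Cx_eq; unfold Csub, Cadd, Copp, C0 in *; injection E; simpl; intros; lra. }
  assert (Hd1e : dphie 1%nat = dphi 1%nat).
  { pose proof (HB1 1%nat ltac:(lia)) as E. unfold e in E.
    apply Cx_eq; unfold Csub, Cadd, Copp, C0 in *; injection E; simpl; intros; lra. }
  set (K := Cmul (e n) (RtoC (/ INR (fact n)))).
  assert (HDp : small (fun h => Csub (Csub (phie (Cadd zeta h)) (phi (Cadd zeta h))) (Cmul K (Cpow h n))) n).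
  { eapply small_ext; [|exact HSD]. intros h. f_equal.
    destruct n as [|n']; [lia|]. simpl Tay. rewrite Tay_zero. unfold K. cring.
    intros i Hi; apply HB1; lia. }
  split; [exact Hc0|].
  destruct (jet_data _ _ _ _ Hje) as [r2 [g2 [Hr2 [Hc2 [H20 H2v]]]]].
  destruct (jet_data _ _ _ _ Hjp) as [r1 [g1 [Hr1 [Hc1 [H10 H1v]]]]].
  assert (Hst : strictD phie zeta (dphi 1%nat)).
  { intros eps He. destruct (strict_diff g2 r2 zeta Hr2 ltac:(intros k w Hk Hw; apply Hc2; auto; lia) eps He)
      as [del [Hdel [Hdr Hs]]].
    exists del; split; auto. intros a b Ha Hb. specialize (Hs a b Ha Hb).
    rewrite H2v, Hd1e, !H20 in Hs by (unfold ball in *; lia || lra). exact Hs. }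
  assert (Hlam1 : nsq lambda = 1) by (apply Cnorm1_nsq; auto).
  assert (Hez : phie zeta = lambda).
  { unfold phie, reflect_map. rewrite (rho_unit zeta) by (apply Cnorm1_nsq; auto).
    fold lambda. apply rho_unit; auto. }
  destruct Hsig as [r0 [Hr0 [Hhol [Hsz Hinv]]]]. fold phi lambda in Hhol, Hsz, Hinv.
  destruct (Hhol lambda ltac:(replace (Csub lambda lambda) with C0 by cring; rewrite Cnorm_C0; lra)) as [ls Hls].
  apply Cderiv_Dlin in Hls.
  assert (Hsc : small (fun h => Csub (sigma (Cadd lambda h)) zeta) 0).
  { rewrite <- Hsz. apply (Dlin_cont _ _ _ Hls). }
  set (rS := Rmin r1 r2).
  assert (HrS : 0 < rS) by (apply Rmin_pos; auto).
  pose proof (Rmin_l r1 r2) as HrS1. pose proof (Rmin_r r1 r2) as HrS2. fold rS in HrS1, HrS2.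
  destruct (small0_ball _ _ Hsc rS HrS) as [ds [Hds Hdsb]].
  set (rs := Rmin ds r0).
  assert (Hrs : 0 < rs) by (apply Rmin_pos; auto).
  pose proof (Rmin_l ds r0) as Hrs1. pose proof (Rmin_r ds r0) as Hrs2. fold rs in Hrs1, Hrs2.
  assert (HsB : forall w, ball lambda rs w -> ball zeta rS (sigma w)).
  { intros w Hw. unfold ball in Hw. specialize (Hdsb (Csub w lambda) ltac:(lra)).
    replace (Cadd lambda (Csub w lambda)) with w in Hdsb by cring. exact Hdsb. }
  assert (HsD : forall w, ball lambda rs w -> Dlin sigma w (Cinv (g2 1%nat (sigma w))) /\ g2 1%nat (sigma w) <> C0).
  { intros w Hw.
    destruct (Hhol w ltac:(unfold ball in Hw; lra)) as [lw Hlw]. apply Cderiv_Dlin in Hlw.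
    assert (Hsw2 : ball zeta r2 (sigma w)) by (specialize (HsB w Hw); unfold ball in *; lra).
    assert (HeDw : Dlin phie (sigma w) (g2 1%nat (sigma w))).
    { destruct (ball_open zeta r2 (sigma w) Hsw2) as [r' [Hr' Hr'b]].
      apply (Dlin_local (g2 O) phie (sigma w) _ r' Hr'). intros v Hv; apply H20; auto.
      apply Hc2; auto; lia. }
    assert (Hcomp := Dlin_comp phie sigma w _ _ Hlw HeDw).
    assert (Hidd : Dlin (fun x => phie (sigma x)) w C1).
    { destruct (ball_open lambda r0 w ltac:(unfold ball in *; lra)) as [r' [Hr' Hr'b]].
      apply (Dlin_local (fun x => x) _ w C1 r' Hr'). intros v Hv. symmetry. apply Hinv. apply Hr'b; auto.
      apply Dlin_id. }
    pose proof (Dlin_unique _ _ _ _ Hcomp Hidd) as E.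
    assert (Hnz : g2 1%nat (sigma w) <> C0).
    { intro Z. rewrite Z in E. apply C1_neq0. rewrite <- E. cring. }
    split; auto.
    replace (Cinv (g2 1%nat (sigma w))) with lw; auto.
    transitivity (Cmul (Cmul (Cinv (g2 1%nat (sigma w))) (g2 1%nat (sigma w))) lw).
    rewrite Cinv_l by auto. cring.
    transitivity (Cmul (Cinv (g2 1%nat (sigma w))) (Cmul (g2 1%nat (sigma w)) lw)). cring.
    rewrite E. cring. }
  assert (HCs : forall k, (k <= n)%nat -> Ck k (ball lambda rs) sigma).
  { induction k; intros Hk; simpl; auto.
    exists (fun w => Cinv (g2 1%nat (sigma w))). split. intros w Hw; apply HsD; auto.
    apply (Ck_comp k (ball lambda rs) (fun w => w <> C0) Cinv (fun w => g2 1%nat (sigma w))).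
    apply Ck_Cinv.
    apply (Ck_comp k _ (ball zeta r2) (g2 1%nat) sigma).
    apply (chain_Ck g2 n _ Hc2 k 1%nat); lia. apply IHk; lia.
    intros w Hw. specialize (HsB w Hw). unfold ball in *; lra.
    intros w Hw; apply HsD; auto. }
  assert (HCp : Ck n (ball zeta r1) phi).
  { apply (Ck_local n _ (g1 O) phi (ball_open zeta r1)). intros; apply H10; auto.
    apply (chain_Ck g1 n _ Hc1 n 0); lia. }
  destruct n as [|n']; [lia|].
  split.
  -
    assert (Hpc := Dlin_cont _ _ _ HpD). fold lambda in Hpc.
    destruct (small0_ball _ _ Hpc rs Hrs) as [dp [Hdp Hdpb]].
    set (rp := Rmin dp r1).
    assert (Hrp : 0 < rp) by (apply Rmin_pos; auto).
    pose proof (Rmin_l dp r1) as Hrp1. pose proof (Rmin_r dp r1) as Hrp2. fold rp in Hrp1, Hrp2.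
    assert (HpB : forall w, ball zeta rp w -> ball lambda rs (phi w)).
    { intros w Hw. unfold ball in Hw. specialize (Hdpb (Csub w zeta) ltac:(lra)).
      replace (Cadd zeta (Csub w zeta)) with w in Hdpb by cring. exact Hdpb. }
    assert (HCpsi : Ck (S n') (ball zeta rp) (fun z => sigma (phi z))).
    { apply (Ck_comp (S n') _ (ball lambda rs) sigma phi). apply HCs; lia.
      apply (Ck_sub_set (S n') (ball zeta r1)); auto. intros w Hw; unfold ball in *; lra. exact HpB. }
    assert (Hpsic : small (fun h => Csub (sigma (phi (Cadd zeta h))) zeta) 0).
    { destruct HCpsi as [f' [Hf' _]]. pose proof (Dlin_cont _ _ _ (Hf' zeta (ball_center zeta rp Hrp))) as X.
      cbv beta in X. fold lambda in X. rewrite Hsz in X. exact X. }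
    assert (Hpsiid : exists r, 0 < r /\ forall h, Cnorm h < r -> phie (sigma (phi (Cadd zeta h))) = phi (Cadd zeta h)).
    { exists rp; split; auto. intros h Hh. apply Hinv.
      assert (ball zeta rp (Cadd zeta h)) by (unfold ball; replace (Csub (Cadd zeta h) zeta) with h by cring; auto).
      specialize (HpB _ H). unfold ball in HpB. lra. }
    pose proof (expand_psi phi phie (fun z => sigma (phi z)) zeta (dphi 1%nat) K (S n') Hd1 Hst HDp Hpsic Hpsiid) as X.
    apply (make_jet _ zeta (S n') _ rp Hrp Hn0 HCpsi).
    eapply small_ext; [|exact X]. intros h. cbv beta. rewrite Tay_jet_form by lia.
    f_equal. f_equal. unfold K, e, c, Cdiv. cring.
  -
    assert (HCchi : Ck (S n') (ball lambda rs) (fun w => phi (sigma w))).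
    { apply (Ck_comp (S n') _ (ball zeta r1) phi sigma); auto.
      intros w Hw. specialize (HsB w Hw). unfold ball in *; lra. }
    assert (Hchiid : exists r, 0 < r /\ forall h, Cnorm h < r -> phie (sigma (Cadd lambda h)) = Cadd lambda h).
    { exists r0; split; auto. intros h Hh. apply Hinv. replace (Csub (Cadd lambda h) lambda) with h by cring; auto. }
    pose proof (expand_chi phi phie sigma zeta lambda (dphi 1%nat) K n' Hd1 Hst HDp Hsc Hez Hchiid) as X.
    apply (make_jet _ lambda (S n') _ rs Hrs Hn0 HCchi).
    eapply small_ext; [|exact X]. intros h. cbv beta. rewrite Tay_jet_form by lia.
    f_equal. f_equal. unfold Cdiv. rewrite Cinv_pow by auto. unfold K, e, c. cring.
Qed.
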